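(* Let $\mathcal K$ be a 2-category which admits Eilenberg–Moore constructions for monads and in which idempotent 2-cells split. For every 1-cell $(V,\psi):(t,\mu,\eta)\to(t',\mu',\eta')$ of $\mathrm{EM}^w(\mathcal K)$ fix a splitting $Vv\overset{\pi}{\Rightarrow}\widetilde V\overset{\iota}{\Rightarrow}Vv$ of the idempotent $Vv\epsilon\ast\psi v\ast\eta'Vv$. Define: $J^w(t):=J(t)$ on 0-cells; on a 1-cell, $J^w(V,\psi)$ is the unique 1-cell $J(t)\to J(t')$ of $\mathcal K$ with $v'J^w(V,\psi)=\widetilde V$ and $v'\epsilon'J^w(V,\psi)=\pi\ast Vv\epsilon\ast\psi v\ast t'\iota$; on a 2-cell $\varrho:(V,\psi)\Rightarrow(W,\phi)$, $J^w(\varrho)$ is the unique 2-cell $J^w(V,\psi)\Rightarrow J^w(W,\phi)$ of $\mathcal K$ with $v'J^w(\varrho)=\pi\ast Wv\epsilon\ast\varrho v\ast\iota$. Then these maps determine a pseudo-functor $J^w:\mathrm{EM}^w(\mathcal K)\to\mathcal K$ (strictly preserving identity 2-cells and vertical composition, and preserving identity 1-cells and horizontal composition up to coherent invertible 2-cells). Its pseudo-natural isomorphism class does not depend on the choice of the splittings $\iota,\pi$.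
   Context: Conventions in a 2-category $\mathcal K$: horizontal composition and whiskering by juxtaposition in the order of functor composition; identity 1-cell of $k$ written $k$, identity 2-cell of $V$ written $V$; vertical composition $\ast$ with $\alpha\ast\beta$ meaning $\beta$ then $\alpha$. A monad $(t,\mu,\eta)$ on $k$: $t:k\to k$, $\mu:tt\Rightarrow t$, $\eta:k\Rightarrow t$, associative and unital. The 2-category $\mathrm{EM}^w(\mathcal K)$: 0-cells are monads; a 1-cell $(t,\mu,\eta)\to(t',\mu',\eta')$ ($t$ on $k$, $t'$ on $k'$) is $(V,\psi)$, $V:k\to k'$, $\psi:t'V\Rightarrow Vt$, with $V\mu\ast\psi t\ast t'\psi=\psi\ast\mu'V$; a 2-cell $(V,\psi)\Rightarrow(W,\phi)$ is $\varrho:V\Rightarrow Wt$ with $W\mu\ast\varrho t\ast\psi=W\mu\ast\phi t\ast t'\varrho$ and $\varrho=W\mu\ast\phi t\ast\eta'Wt\ast\varrho$; identity 1-cell on $t$ is $(k,t)$, identity 2-cell on $(W,\phi)$ is $\phi\ast\eta'W$; 1-cell composite $(V',\psi')\circ(V,\psi)=(V'V,V'\psi\ast\psi'V)$; 2-cell horizontal composite $\varrho'\circ\varrho=W'W\mu\ast W'\varrho t\ast W'\psi\ast\varrho'V$; vertical composite $\tau\bullet\varrho=U\mu\ast\tau t\ast\varrho$. $\mathcal K$ admits Eilenberg–Moore constructions for monads: the inclusion 2-functor $I:\mathcal K\to\mathrm{EM}(\mathcal K)$ into the Lack–Street 2-category of monads has a right 2-adjoint $J$. Then each monad $(t,\mu,\eta)$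 on $k$ determines an adjunction $f\dashv v$, $f:k\to J(t)$, $v:J(t)\to k$, unit $\eta:k\Rightarrow vf$, counit $\epsilon:fv\Rightarrow J(t)$, with $t=vf$, $\mu=v\epsilon f$ (for $t'$: $f',v',\eta',\epsilon'$); and for each 0-cell $l$ the functor $\mathcal K(l,J(t))\to\{t\text{-algebras on }l\}$, $X\mapsto(vX,v\epsilon X)$, $\omega\mapsto v\omega$, is an isomorphism of categories, where a $t$-algebra is a pair $(A:l\to k,\ \alpha:tA\Rightarrow A)$ with $\alpha\ast t\alpha=\alpha\ast\mu A$, $\alpha\ast\eta A=A$, and morphisms $(A,\alpha)\to(B,\beta)$ are $\rho:A\Rightarrow B$ with $\beta\ast t\rho=\rho\ast\alpha$. Idempotent 2-cells split: every $e=e\ast e$ factors as $e=\iota\ast\pi$ with $\pi\ast\iota$ an identity. The 2-cell $Vv\epsilon\ast\psi v\ast\eta'Vv$ is idempotent, $(\widetilde V,\pi\ast Vv\epsilon\ast\psi v\ast t'\iota)$ is a $t'$-algebra on $J(t)$, and $\pi\ast Wv\epsilon\ast\varrho v\ast\iota$ is a morphism of $t'$-algebras, so $J^w$ is well defined. *)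

(* Defs.v *)
(* Conventions (as in the paper):
   - [comp1 g f] is g∘f (order of functor composition);
   - [vcomp al be] is "al * be" = be, then al;
   - [hcomp al be] is the horizontal composite (al ∘ be);
     juxtaposition/whiskering  f be  :=  hcomp (id2 f) be,  al f := hcomp al (id2 f);
   - 2-cells are "untyped": [cell a b] is the type of all 2-cells between
     1-cells a -> b, with source/target given by [src2]/[tgt2].  This avoids
     transports along the (strict) equations between 1-cells. *)

Unset Implicit Arguments.


Record TwoCat : Type := {
  ob :> Type;
  hom : ob -> ob -> Type;
  cell : ob -> ob -> Type;
  src2 : forall a b : ob, cell a b -> hom a b;
  tgt2 : forall a b : ob, cell a b -> hom a b;
  id1 : forall a : ob, hom a a;
  comp1 : forall a b c : ob, hom b c -> hom a b -> hom a c;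
  id2 : forall a b : ob, hom a b -> cell a b;
  vcomp : forall a b : ob, cell a b -> cell a b -> cell a b;
  hcomp : forall a b c : ob, cell b c -> cell a b -> cell a c
}.

Arguments hom {t} _ _.
Arguments cell {t} _ _.
Arguments src2 {t a b} _.
Arguments tgt2 {t a b} _.
Arguments id1 {t} a.
Arguments comp1 {t a b c} _ _.
Arguments id2 {t a b} _.
Arguments vcomp {t a b} _ _.
Arguments hcomp {t a b c} _ _.

Definition is2 {K : TwoCat} {a b : K} (al : cell a b) (f g : hom a b) : Prop :=
  src2 al = f /\ tgt2 al = g.

Record strict_2cat (K : TwoCat) : Prop := {
  src_id2 : forall (a b : K) (f : hom a b), src2 (id2 f) = f;
  tgt_id2 : forall (a b : K) (f : hom a b), tgt2 (id2 f) = f;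
  src_vcomp : forall (a b : K) (al be : cell a b),
      tgt2 be = src2 al -> src2 (vcomp al be) = src2 be;
  tgt_vcomp : forall (a b : K) (al be : cell a b),
      tgt2 be = src2 al -> tgt2 (vcomp al be) = tgt2 al;
  src_hcomp : forall (a b c : K) (al : cell b c) (be : cell a b),
      src2 (hcomp al be) = comp1 (src2 al) (src2 be);
  tgt_hcomp : forall (a b c : K) (al : cell b c) (be : cell a b),
      tgt2 (hcomp al be) = comp1 (tgt2 al) (tgt2 be);
  comp1A : forall (a b c d : K) (f : hom c d) (g : hom b c) (h : hom a b),
      comp1 f (comp1 g h) = comp1 (comp1 f g) h;
  comp1_id_l : forall (a b : K) (f : hom a b), comp1 (id1 b) f = f;
  comp1_id_r : forall (a b : K) (f : hom a b), comp1 f (id1 a) = f;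
  vcompA : forall (a b : K) (al be ga : cell a b),
      tgt2 ga = src2 be -> tgt2 be = src2 al ->
      vcomp al (vcomp be ga) = vcomp (vcomp al be) ga;
  vcomp_id_r : forall (a b : K) (al : cell a b), vcomp al (id2 (src2 al)) = al;
  vcomp_id_l : forall (a b : K) (al : cell a b), vcomp (id2 (tgt2 al)) al = al;
  hcompA : forall (a b c d : K) (al : cell c d) (be : cell b c) (ga : cell a b),
      hcomp al (hcomp be ga) = hcomp (hcomp al be) ga;
  hcomp_id_l : forall (a b : K) (al : cell a b), hcomp (id2 (id1 b)) al = al;
  hcomp_id_r : forall (a b : K) (al : cell a b), hcomp al (id2 (id1 a)) = al;
  hcomp_id2 : forall (a b c : K) (f : hom b c) (g : hom a b),
      hcomp (id2 f) (id2 g) = id2 (comp1 f g);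
  interchange : forall (a b c : K) (al al' : cell b c) (be be' : cell a b),
      tgt2 al = src2 al' -> tgt2 be = src2 be' ->
      hcomp (vcomp al' al) (vcomp be' be) = vcomp (hcomp al' be') (hcomp al be)
}.

Definition is_iso2 {K : TwoCat} {a b : K} (al : cell a b) (f g : hom a b) : Prop :=
  is2 al f g /\
  exists be : cell a b, is2 be g f /\ vcomp be al = id2 f /\ vcomp al be = id2 g.

Definition idempotents_split (K : TwoCat) : Prop :=
  forall (a b : K) (f : hom a b) (e : cell a b),
    is2 e f f -> vcomp e e = e ->
    exists (g : hom a b) (pi io : cell a b),
      is2 pi f g /\ is2 io g f /\ vcomp io pi = e /\ vcomp pi io = id2 g.

Record monad (K : TwoCat) : Type := {
  mk : K;
  mt : hom mk mk;
  mmu : cell mk mk;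
  meta : cell mk mk
}.
Arguments mk {K} m.
Arguments mt {K} m.
Arguments mmu {K} m.
Arguments meta {K} m.

Definition is_monad {K : TwoCat} (m : monad K) : Prop :=
  is2 (mmu m) (comp1 (mt m) (mt m)) (mt m) /\
  is2 (meta m) (id1 (mk m)) (mt m) /\
  vcomp (mmu m) (hcomp (mmu m) (id2 (mt m))) =
    vcomp (mmu m) (hcomp (id2 (mt m)) (mmu m)) /\
  vcomp (mmu m) (hcomp (meta m) (id2 (mt m))) = id2 (mt m) /\
  vcomp (mmu m) (hcomp (id2 (mt m)) (meta m)) = id2 (mt m).

Definition is_alg {K : TwoCat} (m : monad K) {l : K}
    (A : hom l (mk m)) (al : cell l (mk m)) : Prop :=
  is2 al (comp1 (mt m) A) A /\
  vcomp al (hcomp (id2 (mt m)) al) = vcomp al (hcomp (mmu m) (id2 A)) /\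
  vcomp al (hcomp (meta m) (id2 A)) = id2 A.

Definition is_alg_mor {K : TwoCat} (m : monad K) {l : K}
    (A : hom l (mk m)) (al : cell l (mk m))
    (B : hom l (mk m)) (be : cell l (mk m)) (rho : cell l (mk m)) : Prop :=
  is2 rho A B /\ vcomp be (hcomp (id2 (mt m)) rho) = vcomp rho al.

Record EMobj {K : TwoCat} (k : K) : Type := {
  Jo : K;
  Jf : hom k Jo;
  Jv : hom Jo k;
  Jeps : cell Jo Jo
}.
Arguments Jo {K k} e.
Arguments Jf {K k} e.
Arguments Jv {K k} e.
Arguments Jeps {K k} e.

(* E is an Eilenberg-Moore construction for m: f -| v with unit eta and
   counit eps, t = vf, mu = v eps f, and for every l the functor
   K(l, J(t)) -> t-Alg(l), X |-> (vX, v eps X), om |-> v om,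
   is an isomorphism of categories (bijective on objects and on hom-sets). *)
Definition is_EM {K : TwoCat} (m : monad K) (E : EMobj (mk m)) : Prop :=
  mt m = comp1 (Jv E) (Jf E) /\
  is2 (Jeps E) (comp1 (Jf E) (Jv E)) (id1 (Jo E)) /\
  mmu m = hcomp (hcomp (id2 (Jv E)) (Jeps E)) (id2 (Jf E)) /\
  vcomp (hcomp (id2 (Jv E)) (Jeps E)) (hcomp (meta m) (id2 (Jv E))) = id2 (Jv E) /\
  vcomp (hcomp (Jeps E) (id2 (Jf E))) (hcomp (id2 (Jf E)) (meta m)) = id2 (Jf E) /\
  (forall (l : K) (A : hom l (mk m)) (al : cell l (mk m)),
      is_alg m A al ->
      exists X : hom l (Jo E),
        (comp1 (Jv E) X = A /\
         hcomp (hcomp (id2 (Jv E)) (Jeps E)) (id2 X) = al) /\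
        forall X' : hom l (Jo E),
          comp1 (Jv E) X' = A /\
          hcomp (hcomp (id2 (Jv E)) (Jeps E)) (id2 X') = al -> X' = X) /\
  (forall (l : K) (X Y : hom l (Jo E)) (rho : cell l (mk m)),
      is_alg_mor m (comp1 (Jv E) X) (hcomp (hcomp (id2 (Jv E)) (Jeps E)) (id2 X))
                   (comp1 (Jv E) Y) (hcomp (hcomp (id2 (Jv E)) (Jeps E)) (id2 Y)) rho ->
      exists om : cell l (Jo E),
        (is2 om X Y /\ hcomp (id2 (Jv E)) om = rho) /\
        forall om' : cell l (Jo E),
          is2 om' X Y /\ hcomp (id2 (Jv E)) om' = rho -> om' = om).

(* a chosen Eilenberg-Moore construction for every monad (the right 2-adjoint J
   on 0-cells together with the induced adjunctions) *)
Definition EMchoice (K : TwoCat) : Type := forall m : monad K, EMobj (mk m).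

Definition EMchoice_ok {K : TwoCat} (EMc : EMchoice K) : Prop :=
  forall m : monad K, is_monad m -> is_EM m (EMc m).

Definition JO {K : TwoCat} (EMc : EMchoice K) (m : monad K) : K := Jo (EMc m).
Definition Jv' {K : TwoCat} (EMc : EMchoice K) (m : monad K) : hom (JO EMc m) (mk m) :=
  Jv (EMc m).
Definition Jeps' {K : TwoCat} (EMc : EMchoice K) (m : monad K) : cell (JO EMc m) (JO EMc m) :=
  Jeps (EMc m).

Definition is_EMw1 {K : TwoCat} (m m' : monad K)
    (V : hom (mk m) (mk m')) (psi : cell (mk m) (mk m')) : Prop :=
  is2 psi (comp1 (mt m') V) (comp1 V (mt m)) /\
  vcomp (hcomp (id2 V) (mmu m)) (vcomp (hcomp psi (id2 (mt m))) (hcomp (id2 (mt m')) psi))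
  = vcomp psi (hcomp (mmu m') (id2 V)).

Definition is_EMw2 {K : TwoCat} (m m' : monad K)
    (V : hom (mk m) (mk m')) (psi : cell (mk m) (mk m'))
    (W : hom (mk m) (mk m')) (phi : cell (mk m) (mk m'))
    (rho : cell (mk m) (mk m')) : Prop :=
  is2 rho V (comp1 W (mt m)) /\
  vcomp (hcomp (id2 W) (mmu m)) (vcomp (hcomp rho (id2 (mt m))) psi)
  = vcomp (hcomp (id2 W) (mmu m)) (vcomp (hcomp phi (id2 (mt m))) (hcomp (id2 (mt m')) rho)) /\
  rho = vcomp (hcomp (id2 W) (mmu m))
          (vcomp (hcomp phi (id2 (mt m)))
             (vcomp (hcomp (meta m') (id2 (comp1 W (mt m)))) rho)).

Definition id1w_psi {K : TwoCat} (m : monad K) : cell (mk m) (mk m) := id2 (mt m).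

Definition comp1w_psi {K : TwoCat} {a b c : K}
    (V' : hom b c) (psi' : cell b c) (V : hom a b) (psi : cell a b) : cell a c :=
  vcomp (hcomp (id2 V') psi) (hcomp psi' (id2 V)).

Definition id2w {K : TwoCat} (m' : monad K) {a : K}
    (W : hom a (mk m')) (phi : cell a (mk m')) : cell a (mk m') :=
  vcomp phi (hcomp (meta m') (id2 W)).

Definition vcomp2w {K : TwoCat} (m : monad K) {b : K}
    (U : hom (mk m) b) (tau rho : cell (mk m) b) : cell (mk m) b :=
  vcomp (hcomp (id2 U) (mmu m)) (vcomp (hcomp tau (id2 (mt m))) rho).

Definition hcomp2w {K : TwoCat} (m : monad K) {b c : K}
    (W' : hom b c) (W : hom (mk m) b) (V : hom (mk m) b) (psi : cell (mk m) b)
    (rho' : cell b c) (rho : cell (mk m) b) : cell (mk m) c :=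
  vcomp (hcomp (id2 (comp1 W' W)) (mmu m))
    (vcomp (hcomp (id2 W') (hcomp rho (id2 (mt m))))
       (vcomp (hcomp (id2 W') psi) (hcomp rho' (id2 V)))).

Record splitting {K : TwoCat} (a b : K) : Type := {
  sobj : hom a b;
  spi : cell a b;
  siota : cell a b
}.
Arguments sobj {K a b} s.
Arguments spi {K a b} s.
Arguments siota {K a b} s.

Definition idemw {K : TwoCat} (EMc : EMchoice K) (m m' : monad K)
    (V : hom (mk m) (mk m')) (psi : cell (mk m) (mk m')) : cell (JO EMc m) (mk m') :=
  vcomp (hcomp (id2 (comp1 V (Jv' EMc m))) (Jeps' EMc m))
    (vcomp (hcomp psi (id2 (Jv' EMc m)))
       (hcomp (meta m') (id2 (comp1 V (Jv' EMc m))))).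

Definition is_splitting_of {K : TwoCat} {a b : K} (e : cell a b) (f : hom a b)
    (s : splitting a b) : Prop :=
  is2 (spi s) f (sobj s) /\ is2 (siota s) (sobj s) f /\
  vcomp (siota s) (spi s) = e /\ vcomp (spi s) (siota s) = id2 (sobj s).

Definition split_choice {K : TwoCat} (EMc : EMchoice K) : Type :=
  forall m m' : monad K, hom (mk m) (mk m') -> cell (mk m) (mk m') ->
    splitting (JO EMc m) (mk m').

Definition split_choice_ok {K : TwoCat} (EMc : EMchoice K) (spl : split_choice EMc) : Prop :=
  forall (m m' : monad K) (V : hom (mk m) (mk m')) (psi : cell (mk m) (mk m')),
    is_monad m -> is_monad m' -> is_EMw1 m m' V psi ->
    is_splitting_of (idemw EMc m m' V psi) (comp1 V (Jv' EMc m)) (spl m m' V psi).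

(* types of the action of a (candidate) functor EM^w(K) -> K on 1- and 2-cells,
   with J^w(t) = J(t) on 0-cells *)
Definition J1type {K : TwoCat} (EMc : EMchoice K) : Type :=
  forall m m' : monad K, hom (mk m) (mk m') -> cell (mk m) (mk m') ->
    hom (JO EMc m) (JO EMc m').

(* the 2-cell action takes the source 1-cell (V,psi), target 1-cell (W,phi)
   and the 2-cell rho *)
Definition J2type {K : TwoCat} (EMc : EMchoice K) : Type :=
  forall m m' : monad K,
    hom (mk m) (mk m') -> cell (mk m) (mk m') ->
    hom (mk m) (mk m') -> cell (mk m) (mk m') ->
    cell (mk m) (mk m') -> cell (JO EMc m) (JO EMc m').

Definition Utype {K : TwoCat} (EMc : EMchoice K) : Type :=
  forall m : monad K, cell (JO EMc m) (JO EMc m).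

Definition Ctype {K : TwoCat} (EMc : EMchoice K) : Type :=
  forall m1 m2 m3 : monad K,
    hom (mk m2) (mk m3) -> cell (mk m2) (mk m3) ->
    hom (mk m1) (mk m2) -> cell (mk m1) (mk m2) ->
    cell (JO EMc m1) (JO EMc m3).

Definition is_Jw {K : TwoCat} (EMc : EMchoice K) (spl : split_choice EMc)
    (F1 : J1type EMc) (F2 : J2type EMc) : Prop :=
  (forall (m m' : monad K) (V : hom (mk m) (mk m')) (psi : cell (mk m) (mk m')),
      is_monad m -> is_monad m' -> is_EMw1 m m' V psi ->
      comp1 (Jv' EMc m') (F1 m m' V psi) = sobj (spl m m' V psi) /\
      hcomp (hcomp (id2 (Jv' EMc m')) (Jeps' EMc m')) (id2 (F1 m m' V psi)) =
        vcomp (spi (spl m m' V psi))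
          (vcomp (hcomp (id2 (comp1 V (Jv' EMc m))) (Jeps' EMc m))
             (vcomp (hcomp psi (id2 (Jv' EMc m)))
                (hcomp (id2 (mt m')) (siota (spl m m' V psi)))))) /\
  (forall (m m' : monad K) (V W : hom (mk m) (mk m')) (psi phi rho : cell (mk m) (mk m')),
      is_monad m -> is_monad m' -> is_EMw1 m m' V psi -> is_EMw1 m m' W phi ->
      is_EMw2 m m' V psi W phi rho ->
      is2 (F2 m m' V psi W phi rho) (F1 m m' V psi) (F1 m m' W phi) /\
      hcomp (id2 (Jv' EMc m')) (F2 m m' V psi W phi rho) =
        vcomp (spi (spl m m' W phi))
          (vcomp (hcomp (id2 (comp1 W (Jv' EMc m))) (Jeps' EMc m))
             (vcomp (hcomp rho (id2 (Jv' EMc m)))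
                (siota (spl m m' V psi))))).

Definition is_pseudofunctor {K : TwoCat} (EMc : EMchoice K)
    (F1 : J1type EMc) (F2 : J2type EMc) (u : Utype EMc) (c : Ctype EMc) : Prop :=
  (forall (m m' : monad K) (V W : hom (mk m) (mk m')) (psi phi rho : cell (mk m) (mk m')),
      is_monad m -> is_monad m' -> is_EMw1 m m' V psi -> is_EMw1 m m' W phi ->
      is_EMw2 m m' V psi W phi rho ->
      is2 (F2 m m' V psi W phi rho) (F1 m m' V psi) (F1 m m' W phi)) /\
  (forall (m m' : monad K) (W : hom (mk m) (mk m')) (phi : cell (mk m) (mk m')),
      is_monad m -> is_monad m' -> is_EMw1 m m' W phi ->
      F2 m m' W phi W phi (id2w m' W phi) = id2 (F1 m m' W phi)) /\
  (forall (m m' : monad K) (V W U : hom (mk m) (mk m'))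
          (psi phi chi rho tau : cell (mk m) (mk m')),
      is_monad m -> is_monad m' ->
      is_EMw1 m m' V psi -> is_EMw1 m m' W phi -> is_EMw1 m m' U chi ->
      is_EMw2 m m' V psi W phi rho -> is_EMw2 m m' W phi U chi tau ->
      F2 m m' V psi U chi (vcomp2w m U tau rho) =
        vcomp (F2 m m' W phi U chi tau) (F2 m m' V psi W phi rho)) /\
  (forall m : monad K, is_monad m ->
      is_iso2 (u m) (id1 (JO EMc m)) (F1 m m (id1 (mk m)) (id1w_psi m))) /\
  (forall (m1 m2 m3 : monad K) (V : hom (mk m1) (mk m2)) (psi : cell (mk m1) (mk m2))
          (V' : hom (mk m2) (mk m3)) (psi' : cell (mk m2) (mk m3)),
      is_monad m1 -> is_monad m2 -> is_monad m3 ->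
      is_EMw1 m1 m2 V psi -> is_EMw1 m2 m3 V' psi' ->
      is_iso2 (c m1 m2 m3 V' psi' V psi)
        (comp1 (F1 m2 m3 V' psi') (F1 m1 m2 V psi))
        (F1 m1 m3 (comp1 V' V) (comp1w_psi V' psi' V psi))) /\
  (forall (m1 m2 m3 : monad K)
          (V W : hom (mk m1) (mk m2)) (psi phi rho : cell (mk m1) (mk m2))
          (V' W' : hom (mk m2) (mk m3)) (psi' phi' rho' : cell (mk m2) (mk m3)),
      is_monad m1 -> is_monad m2 -> is_monad m3 ->
      is_EMw1 m1 m2 V psi -> is_EMw1 m1 m2 W phi ->
      is_EMw1 m2 m3 V' psi' -> is_EMw1 m2 m3 W' phi' ->
      is_EMw2 m1 m2 V psi W phi rho -> is_EMw2 m2 m3 V' psi' W' phi' rho' ->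
      vcomp (c m1 m2 m3 W' phi' W phi)
        (hcomp (F2 m2 m3 V' psi' W' phi' rho') (F2 m1 m2 V psi W phi rho)) =
      vcomp (F2 m1 m3 (comp1 V' V) (comp1w_psi V' psi' V psi)
                      (comp1 W' W) (comp1w_psi W' phi' W phi)
                      (hcomp2w m1 W' W V psi rho' rho))
        (c m1 m2 m3 V' psi' V psi)) /\
  (forall (m1 m2 m3 m4 : monad K)
          (V : hom (mk m1) (mk m2)) (psi : cell (mk m1) (mk m2))
          (V' : hom (mk m2) (mk m3)) (psi' : cell (mk m2) (mk m3))
          (V'' : hom (mk m3) (mk m4)) (psi'' : cell (mk m3) (mk m4)),
      is_monad m1 -> is_monad m2 -> is_monad m3 -> is_monad m4 ->
      is_EMw1 m1 m2 V psi -> is_EMw1 m2 m3 V' psi' -> is_EMw1 m3 m4 V'' psi'' ->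
      vcomp (c m1 m3 m4 V'' psi'' (comp1 V' V) (comp1w_psi V' psi' V psi))
        (hcomp (id2 (F1 m3 m4 V'' psi'')) (c m1 m2 m3 V' psi' V psi)) =
      vcomp (c m1 m2 m4 (comp1 V'' V') (comp1w_psi V'' psi'' V' psi') V psi)
        (hcomp (c m2 m3 m4 V'' psi'' V' psi') (id2 (F1 m1 m2 V psi)))) /\
  (forall (m m' : monad K) (V : hom (mk m) (mk m')) (psi : cell (mk m) (mk m')),
      is_monad m -> is_monad m' -> is_EMw1 m m' V psi ->
      vcomp (c m m m' V psi (id1 (mk m)) (id1w_psi m))
        (hcomp (id2 (F1 m m' V psi)) (u m)) = id2 (F1 m m' V psi) /\
      vcomp (c m m' m' (id1 (mk m')) (id1w_psi m') V psi)
        (hcomp (u m') (id2 (F1 m m' V psi))) = id2 (F1 m m' V psi)).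

Definition is_psnat_iso {K : TwoCat} (EMc : EMchoice K)
    (F1 : J1type EMc) (F2 : J2type EMc) (uF : Utype EMc) (cF : Ctype EMc)
    (G1 : J1type EMc) (G2 : J2type EMc) (uG : Utype EMc) (cG : Ctype EMc)
    (s0 : forall m : monad K, hom (JO EMc m) (JO EMc m))
    (s1 : forall m m' : monad K, hom (mk m) (mk m') -> cell (mk m) (mk m') ->
            cell (JO EMc m) (JO EMc m')) : Prop :=
  (forall m : monad K, is_monad m ->
      exists r : hom (JO EMc m) (JO EMc m),
        comp1 r (s0 m) = id1 (JO EMc m) /\ comp1 (s0 m) r = id1 (JO EMc m)) /\
  (forall (m m' : monad K) (V : hom (mk m) (mk m')) (psi : cell (mk m) (mk m')),
      is_monad m -> is_monad m' -> is_EMw1 m m' V psi ->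
      is_iso2 (s1 m m' V psi) (comp1 (G1 m m' V psi) (s0 m))
                              (comp1 (s0 m') (F1 m m' V psi))) /\
  (forall (m m' : monad K) (V W : hom (mk m) (mk m')) (psi phi rho : cell (mk m) (mk m')),
      is_monad m -> is_monad m' -> is_EMw1 m m' V psi -> is_EMw1 m m' W phi ->
      is_EMw2 m m' V psi W phi rho ->
      vcomp (s1 m m' W phi) (hcomp (G2 m m' V psi W phi rho) (id2 (s0 m))) =
      vcomp (hcomp (id2 (s0 m')) (F2 m m' V psi W phi rho)) (s1 m m' V psi)) /\
  (forall m : monad K, is_monad m ->
      vcomp (s1 m m (id1 (mk m)) (id1w_psi m)) (hcomp (uG m) (id2 (s0 m))) =
      hcomp (id2 (s0 m)) (uF m)) /\
  (forall (m1 m2 m3 : monad K) (V : hom (mk m1) (mk m2)) (psi : cell (mk m1) (mk m2))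
          (V' : hom (mk m2) (mk m3)) (psi' : cell (mk m2) (mk m3)),
      is_monad m1 -> is_monad m2 -> is_monad m3 ->
      is_EMw1 m1 m2 V psi -> is_EMw1 m2 m3 V' psi' ->
      vcomp (s1 m1 m3 (comp1 V' V) (comp1w_psi V' psi' V psi))
        (hcomp (cG m1 m2 m3 V' psi' V psi) (id2 (s0 m1))) =
      vcomp (hcomp (id2 (s0 m3)) (cF m1 m2 m3 V' psi' V psi))
        (vcomp (hcomp (s1 m2 m3 V' psi') (id2 (F1 m1 m2 V psi)))
           (hcomp (id2 (G1 m2 m3 V' psi')) (s1 m1 m2 V psi)))).

(* Main.v *)
Require Import Defs.
From Stdlib Require Import List ClassicalEpsilon.
Import ListNotations.

Definition HE (P : Prop) : Prop := P.

Existing Class strict_2cat.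
Section Gen.
Context {K : TwoCat} {HK : strict_2cat K}.

Lemma sid2 (a b : K) (f : hom a b) : src2 (id2 f) = f. Proof. apply (src_id2 _ HK). Qed.
Lemma tid2 (a b : K) (f : hom a b) : tgt2 (id2 f) = f. Proof. apply (tgt_id2 _ HK). Qed.
Lemma c1A (a b c d : K) (f : hom c d) (g : hom b c) (h : hom a b) :
  comp1 f (comp1 g h) = comp1 (comp1 f g) h. Proof. apply (comp1A _ HK). Qed.
Lemma c1l (a b : K) (f : hom a b) : comp1 (id1 b) f = f. Proof. apply (comp1_id_l _ HK). Qed.
Lemma c1r (a b : K) (f : hom a b) : comp1 f (id1 a) = f. Proof. apply (comp1_id_r _ HK). Qed.

Lemma is2_vc (a b : K) (x y : cell a b) f g g' h :
  is2 y f g -> is2 x g' h -> g = g' -> is2 (vcomp x y) f h.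
Proof.
  intros [H1 H2] [H3 H4] E; subst. split.
  - rewrite (src_vcomp _ HK); congruence.
  - rewrite (tgt_vcomp _ HK); congruence.
Qed.
Lemma is2_hc (a b c : K) (x : cell b c) (y : cell a b) f g f' g' :
  is2 x f g -> is2 y f' g' -> is2 (hcomp x y) (comp1 f f') (comp1 g g').
Proof.
  intros [H1 H2] [H3 H4]; split.
  - rewrite (src_hcomp _ HK); congruence.
  - rewrite (tgt_hcomp _ HK); congruence.
Qed.
Lemma is2_id (a b : K) (f : hom a b) : is2 (id2 f) f f.
Proof. split; [apply sid2|apply tid2]. Qed.
Lemma is2_conv (a b : K) (x : cell a b) f g f' g' :
  is2 x f g -> f = f' -> g = g' -> is2 x f' g'.
Proof. intros H E1 E2; subst; exact H. Qed.
Lemma tyeq_lem (a b : K) (x y : cell a b) f g g' h :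
  is2 y f g -> is2 x g' h -> g = g' -> tgt2 y = src2 x.
Proof. intros [_ H1] [H2 _] E; congruence. Qed.

Fixpoint ch {a b : K} (d : cell a b) (l : list (cell a b)) : cell a b :=
  match l with
  | nil => d
  | x :: l' => match l' with nil => x | _ => vcomp x (ch d l') end
  end.
Fixpoint wt {a b : K} (l : list (cell a b)) : Prop :=
  match l with
  | nil => True
  | x :: l' => match l' with nil => True | y :: _ => tgt2 y = src2 x /\ wt l' end
  end.

Lemma ch_cons {a b : K} (d x : cell a b) l : l <> nil -> ch d (x :: l) = vcomp x (ch d l).
Proof. destruct l; [congruence|reflexivity]. Qed.

Lemma ch_tgt {a b : K} (d : cell a b) x l : wt (x :: l) -> tgt2 (ch d (x :: l)) = tgt2 x.
Proof.
  revert x. induction l as [|y l IH]; intros x W; [reflexivity|].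
  destruct W as [W1 W2]. rewrite ch_cons by congruence.
  rewrite (tgt_vcomp _ HK); auto. rewrite IH; auto.
Qed.

Lemma ch_src {a b : K} (d : cell a b) x l : wt (x :: l) -> src2 (ch d (x :: l)) = src2 (last (x :: l) d).
Proof.
  revert x. induction l as [|y l IH]; intros x W; [reflexivity|].
  destruct W as [W1 W2]. rewrite ch_cons by congruence.
  rewrite (src_vcomp _ HK). apply IH; auto. rewrite ch_tgt; auto.
Qed.

Lemma wt_app {a b : K} (l1 l2 : list (cell a b)) (d : cell a b) :
  wt (l1 ++ l2) -> wt l1 /\ wt l2 /\ (l1 <> nil -> l2 <> nil -> tgt2 (hd d l2) = src2 (last l1 d)).
Proof.
  induction l1 as [|x l1 IH]; intros W.
  - simpl in *. repeat split; auto. congruence.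
  - destruct l1 as [|y l1].
    + simpl in *. destruct l2 as [|z l2]; simpl in *; repeat split; try tauto.
    + change ((x :: y :: l1) ++ l2) with (x :: y :: (l1 ++ l2)) in W.
      destruct W as [W1 W2]. destruct (IH W2) as (A1 & A2 & A3).
      repeat split; auto.
      intros _ N. specialize (A3 ltac:(congruence) N). exact A3.
Qed.

Lemma ch_app {a b : K} (d : cell a b) l1 l2 :
  wt (l1 ++ l2) -> l1 <> nil -> l2 <> nil -> ch d (l1 ++ l2) = vcomp (ch d l1) (ch d l2).
Proof.
  induction l1 as [|x l1 IH]; [congruence|]. intros W _ N2.
  destruct l1 as [|y l1].
  - simpl. destruct l2; [congruence|reflexivity].
  - pose proof (wt_app _ _ d W) as (A1 & A2 & A3).
    change ((x :: y :: l1) ++ l2) with (x :: ((y :: l1) ++ l2)) in *.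
    rewrite ch_cons by (simpl; congruence).
    rewrite (ch_cons d x (y :: l1)) by congruence.
    pose proof W as W0. simpl in W. destruct W as [W1 W2].
    rewrite IH; auto; try congruence.
    destruct l2 as [|z l2]; [congruence|].
    apply (vcompA _ HK).
    + rewrite ch_tgt by exact A2. rewrite ch_src by exact (proj2 A1).
      specialize (A3 ltac:(congruence) ltac:(congruence)). simpl in A3.
      rewrite A3. reflexivity.
    + rewrite ch_tgt; auto. apply (proj2 A1).
Qed.

Lemma wt_tail {a b : K} (x : cell a b) l : wt (x :: l) -> wt l.
Proof. destruct l; simpl; tauto. Qed.

Lemma grp_lem {a b : K} (d : cell a b) (P S Q : list (cell a b)) :
  wt (P ++ S ++ Q) -> S <> nil ->
  ch d (P ++ S ++ Q) = ch d (P ++ ch d S :: Q).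
Proof.
  intros W NS.
  induction P as [|x P IH].
  - simpl. destruct Q as [|q Q].
    + rewrite app_nil_r. destruct S as [|s S]; [congruence|]. destruct S; reflexivity.
    + rewrite ch_app by (auto; congruence). reflexivity.
  - simpl ((x :: P) ++ _).
    assert (W' : wt (P ++ S ++ Q)).
    { exact (wt_tail _ _ W). }
    rewrite ch_cons. rewrite ch_cons. f_equal. apply IH. exact W'.
    destruct P; simpl; congruence.
    destruct P; simpl; destruct S; simpl; congruence.
Qed.

Lemma vA (a b : K) (x y z : cell a b) :
  tgt2 z = src2 y -> tgt2 y = src2 x -> vcomp (vcomp x y) z = vcomp x (vcomp y z).
Proof. intros; symmetry; apply (vcompA _ HK); auto. Qed.
Lemma vidl (a b : K) f (x : cell a b) : tgt2 x = f -> vcomp (id2 f) x = x.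
Proof. intros <-. apply (vcomp_id_l _ HK). Qed.
Lemma vidr (a b : K) f (x : cell a b) : src2 x = f -> vcomp x (id2 f) = x.
Proof. intros <-. apply (vcomp_id_r _ HK). Qed.
Lemma hid_l (a b : K) (x : cell a b) : hcomp (id2 (id1 b)) x = x.
Proof. apply (hcomp_id_l _ HK). Qed.
Lemma hid_r (a b : K) (x : cell a b) : hcomp x (id2 (id1 a)) = x.
Proof. apply (hcomp_id_r _ HK). Qed.
Lemma hid2 (a b c : K) (f : hom b c) (g : hom a b) : hcomp (id2 f) (id2 g) = id2 (comp1 f g).
Proof. apply (hcomp_id2 _ HK). Qed.
Lemma hA (a b c d : K) (x : cell c d) (y : cell b c) (z : cell a b) :
  hcomp x (hcomp y z) = hcomp (hcomp x y) z.
Proof. apply (hcompA _ HK). Qed.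
Lemma wl_wl (a b c d : K) (L : hom c d) (M : hom b c) (x : cell a b) :
  hcomp (id2 L) (hcomp (id2 M) x) = hcomp (id2 (comp1 L M)) x.
Proof. rewrite hA, hid2; reflexivity. Qed.
Lemma wr_wr (a b c d : K) (x : cell c d) (R : hom b c) (S : hom a b) :
  hcomp (hcomp x (id2 R)) (id2 S) = hcomp x (id2 (comp1 R S)).
Proof. rewrite <- hA, hid2; reflexivity. Qed.
Lemma wl_wr (a b c d : K) (L : hom c d) (x : cell b c) (R : hom a b) :
  hcomp (hcomp (id2 L) x) (id2 R) = hcomp (id2 L) (hcomp x (id2 R)).
Proof. rewrite hA; reflexivity. Qed.
Lemma idid (a b : K) (f : hom a b) : vcomp (id2 f) (id2 f) = id2 f.
Proof. rewrite <- (tid2 _ _ f) at 1. apply (vcomp_id_l _ HK). Qed.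
Lemma wl_vc (a b c : K) (L : hom b c) (x y : cell a b) :
  tgt2 y = src2 x -> hcomp (id2 L) (vcomp x y) = vcomp (hcomp (id2 L) x) (hcomp (id2 L) y).
Proof.
  intros E. rewrite <- (idid _ _ L) at 1. apply (interchange _ HK); auto.
  rewrite sid2, tid2; reflexivity.
Qed.
Lemma wr_vc (a b c : K) (R : hom a b) (x y : cell b c) :
  tgt2 y = src2 x -> hcomp (vcomp x y) (id2 R) = vcomp (hcomp x (id2 R)) (hcomp y (id2 R)).
Proof.
  intros E. rewrite <- (idid _ _ R) at 1. apply (interchange _ HK); auto.
  rewrite sid2, tid2; reflexivity.
Qed.
Lemma hc_split1 (a b c : K) (x : cell b c) (y : cell a b) :
  hcomp x y = vcomp (hcomp x (id2 (tgt2 y))) (hcomp (id2 (src2 x)) y).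
Proof.
  rewrite <- (interchange _ HK).
  - rewrite (vcomp_id_r _ HK). rewrite (vcomp_id_l _ HK). reflexivity.
  - rewrite tid2; reflexivity.
  - rewrite sid2; reflexivity.
Qed.
Lemma hc_split2 (a b c : K) (x : cell b c) (y : cell a b) :
  hcomp x y = vcomp (hcomp (id2 (tgt2 x)) y) (hcomp x (id2 (src2 y))).
Proof.
  rewrite <- (interchange _ HK).
  - rewrite (vcomp_id_r _ HK). rewrite (vcomp_id_l _ HK). reflexivity.
  - rewrite sid2; reflexivity.
  - rewrite tid2; reflexivity.
Qed.
Lemma src_hc (a b c : K) (x : cell b c) (y : cell a b) : src2 (hcomp x y) = comp1 (src2 x) (src2 y).
Proof. apply (src_hcomp _ HK). Qed.
Lemma tgt_hc (a b c : K) (x : cell b c) (y : cell a b) : tgt2 (hcomp x y) = comp1 (tgt2 x) (tgt2 y).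
Proof. apply (tgt_hcomp _ HK). Qed.
Lemma tgt_is2 (a b : K) (x : cell a b) f g g' : is2 x f g -> g = g' -> tgt2 x = g'.
Proof. intros [_ H] <-; exact H. Qed.
Lemma src_is2 (a b : K) (x : cell a b) f f' g : is2 x f g -> f = f' -> src2 x = f'.
Proof. intros [H _] <-; exact H. Qed.
End Gen.

Ltac homeq :=
  first [ reflexivity
        | rewrite ?c1l, ?c1r; rewrite <- ?c1A; rewrite ?c1l, ?c1r; reflexivity
        | repeat match goal with H : HE (?x = ?y) |- context [?x] => rewrite (H : x = y) end;
          repeat first [ rewrite c1l | rewrite c1r | rewrite <- c1A ]; reflexivity ].
Ltac tyr :=
  lazymatch goal with
  | |- is2 (vcomp _ _) _ _ => eapply is2_vc; [tyr|tyr|homeq]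
  | |- is2 (hcomp _ _) _ _ => eapply is2_hc; [tyr|tyr]
  | |- is2 (id2 _) _ _ => eapply is2_id
  | _ => eassumption
  end.
Ltac tyeq := eapply tyeq_lem; [tyr|tyr|homeq].
Ltac tyt := eapply tgt_is2; [tyr|homeq].
Ltac tys := eapply src_is2; [tyr|homeq].
Ltac ty := eapply is2_conv; [tyr|homeq|homeq].

Ltac heq := repeat match goal with H : HE (?x = ?y) |- context [?x] => rewrite (H : x = y) end.
Ltac hnorm :=
  heq;
  rewrite ?src_hc, ?tgt_hc, ?sid2, ?tid2;
  repeat first [ match goal with H : is2 ?x _ _ |- context [src2 ?x] => rewrite (proj1 H) end
               | match goal with H : is2 ?x _ _ |- context [tgt2 ?x] => rewrite (proj2 H) end ];
  heq;
  rewrite ?c1l, ?c1r; rewrite <- ?c1A; rewrite ?c1l, ?c1r.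

Ltac heq_in H := repeat match goal with E : HE (?x = ?y) |- _ =>
    match type of H with context [x] => rewrite (E : x = y) in H end end.
Ltac hnorm_in H := heq_in H; rewrite ?c1l, ?c1r in H; rewrite <- ?c1A in H; rewrite ?c1l, ?c1r in H.
Ltac tnorm := repeat match goal with H : is2 _ _ _ |- _ => progress (hnorm_in H) end.

Ltac nf1 :=
  first [ rewrite wl_wl | rewrite wr_wr | rewrite wl_wr | rewrite hid_l | rewrite hid_r
        | rewrite hid2
        | rewrite wl_vc by tyeq | rewrite wr_vc by tyeq | rewrite vA by tyeq
        | rewrite vidl by tyt | rewrite vidr by tys ].
Ltac nf := hnorm; repeat (progress (repeat nf1); hnorm).
Ltac hnormq :=
  rewrite ?src_hc, ?tgt_hc, ?sid2, ?tid2;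
  repeat first [ match goal with H : is2 ?x _ _ |- context [src2 ?x] => rewrite (proj1 H) end
               | match goal with H : is2 ?x _ _ |- context [tgt2 ?x] => rewrite (proj2 H) end ];
  rewrite ?c1l, ?c1r; rewrite <- ?c1A; rewrite ?c1l, ?c1r.
Ltac nfq := hnormq; repeat (progress (repeat nf1); hnormq).


Ltac reify E :=
  match E with
  | vcomp ?x ?r => let l := reify r in constr:(x :: l)
  | _ => constr:(E :: nil)
  end.
Ltac wtsolve := cbv [wt app]; repeat split; tyeq.
Ltac foc i k :=
  match goal with |- ?L = ?R =>
    let l := reify L in
    let P := eval cbv [firstn skipn Nat.add] in (firstn i l) in
    let S := eval cbv [firstn skipn Nat.add] in (firstn k (skipn i l)) in
    let Q := eval cbv [firstn skipn Nat.add] in (skipn (i+k) l) in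
    transitivity (ch L (P ++ ch L S :: Q));
      [ exact (grp_lem L P S Q ltac:(wtsolve) ltac:(discriminate)) | cbv [ch app] ]
  end.
Tactic Notation "nfh" ident(H) := revert H; nf; intro H.
Ltac rw i k E := foc i k; rewrite E; nfq.
Ltac rwr i k E := symmetry; rw i k E; symmetry.
Ltac sg := match goal with |- ?G => idtac G end.
Ltac parse x k :=
  lazymatch x with
  | hcomp (id2 ?L) (hcomp ?a (id2 ?R)) => k L a R
  | hcomp (id2 ?L) ?a => lazymatch type of a with cell ?a0 _ => k L a (id1 a0) end
  | hcomp ?a (id2 ?R) => lazymatch type of a with cell _ ?b0 => k (id1 b0) a R end
  | _ => lazymatch type of x with cell ?a0 ?b0 => k (id1 b0) x (id1 a0) end
  end.
Ltac getnth i :=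
  match goal with |- ?L = _ =>
    let l := reify L in
    let x := eval cbv [nth] in (nth i l L) in x end.
Ltac happ a s :=
  lazymatch a with
  | id1 _ => s
  | comp1 ?x ?r => let r' := happ r s in constr:(comp1 x r')
  | _ => lazymatch s with id1 _ => a | _ => constr:(comp1 a s) end
  end.
Ltac hflat h :=
  lazymatch h with
  | comp1 ?a ?b => let a' := hflat a in let b' := hflat b in happ a' b'
  | id1 _ => h
  | _ => match goal with
         | H : HE (h = ?y) |- _ => hflat y
         | _ => h
         end
  end.
Ltac strip P L :=
  lazymatch P with
  | id1 _ => L
  | comp1 ?p ?P' => lazymatch L with comp1 p ?L' => strip P' L' end
  | _ => lazymatch L with
         | comp1 P ?L' => L'
         | P => lazymatch type of P with hom ?b _ => constr:(id1 b) end
         end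
  end.
Ltac srcof a := let H := fresh in
  let r := (eassert (H : is2 a _ _) by tyr;
            lazymatch type of H with is2 _ ?f _ => clear H; hflat f end) in r.
Ltac swo i :=
  let x1 := getnth i in let x2 := getnth (S i) in
  parse x1 ltac:(fun L al X1 =>
  parse x2 ltac:(fun L2 a2 R =>
    let H := fresh in
    eassert (H : is2 al _ _) by tyr;
    lazymatch type of H with is2 _ ?f _ =>
    clear H;
    let P0 := hflat L in let f' := hflat f in let P := happ P0 f' in
    let L2' := hflat L2 in let X := strip P L2' in
    let be := constr:(hcomp (id2 X) a2) in
    let E := fresh "E" in
    assert (E : vcomp x1 x2 =
       vcomp (hcomp (id2 (comp1 L (tgt2 al))) (hcomp be (id2 R)))
             (hcomp (id2 L) (hcomp al (id2 (comp1 (src2 be) R)))));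
    [ transitivity (hcomp (id2 L) (hcomp (hcomp al be) (id2 R)));
      [ rewrite (@hc_split1 _ _ _ _ _ al be); nf; reflexivity
      | rewrite (@hc_split2 _ _ _ _ _ al be); nf; reflexivity ]
    | nfh E; foc i 2; rewrite E; clear E; nfq ] end)).
Ltac swi i :=
  let x1 := getnth i in let x2 := getnth (S i) in
  parse x1 ltac:(fun L1 a1 R =>
  parse x2 ltac:(fun L al X2 =>
    let H := fresh in
    eassert (H : is2 al _ _) by tyr;
    lazymatch type of H with is2 _ _ ?g =>
    clear H;
    let P0 := hflat L in let g' := hflat g in let P := happ P0 g' in
    let L1' := hflat L1 in let X := strip P L1' in
    let be := constr:(hcomp (id2 X) a1) in
    let E := fresh "E" in
    assert (E : vcomp x1 x2 =
       vcomp (hcomp (id2 L) (hcomp al (id2 (comp1 (tgt2 be) R))))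
             (hcomp (id2 (comp1 L (src2 al))) (hcomp be (id2 R))));
    [ transitivity (hcomp (id2 L) (hcomp (hcomp al be) (id2 R)));
      [ rewrite (@hc_split2 _ _ _ _ _ al be); nf; reflexivity
      | rewrite (@hc_split1 _ _ _ _ _ al be); nf; reflexivity ]
    | nfh E; foc i 2; rewrite E; clear E; nfq ] end)).

Section WA.
Context {K : TwoCat} {HK : strict_2cat K}.
Variable n : monad K.
Hypothesis Hn : is_monad n.
Let t := mt n. Let mu := mmu n. Let eta := meta n.
Variables (l : K) (A : hom l (mk n)) (be : cell l (mk n)).
Hypothesis Hbe : is2 be (comp1 (mt n) A) A.
Hypothesis Hba : vcomp be (hcomp (id2 (mt n)) be) = vcomp be (hcomp (mmu n) (id2 A)).

Lemma WA_e_be : vcomp (vcomp be (hcomp (meta n) (id2 A))) be = be.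
Proof.
  destruct Hn as (Hmu & Heta & Hass & Hu1 & Hu2).
  nf. swo 1. rw 0 2 Hba.
  pose proof (f_equal (fun z => hcomp z (id2 A)) Hu1) as H; cbv beta in H.
  nfh H. rw 1 2 H. reflexivity. Qed.

Lemma WA_be_te : vcomp be (hcomp (id2 (mt n)) (vcomp be (hcomp (meta n) (id2 A)))) = be.
Proof.
  destruct Hn as (Hmu & Heta & Hass & Hu1 & Hu2).
  nf. rw 0 2 Hba.
  pose proof (f_equal (fun z => hcomp z (id2 A)) Hu2) as H; cbv beta in H.
  nfh H. rw 1 2 H. reflexivity. Qed.

Lemma WA_e_e : vcomp (vcomp be (hcomp (meta n) (id2 A))) (vcomp be (hcomp (meta n) (id2 A)))
  = vcomp be (hcomp (meta n) (id2 A)).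
Proof.
  pose proof WA_e_be as H. destruct Hn as (Hmu & Heta & Hass & Hu1 & Hu2).
  nfh H. nf. rw 0 3 H. reflexivity. Qed.

Variables (At : hom l (mk n)) (pi io : cell l (mk n)).
Hypothesis Hpi : is2 pi A At.
Hypothesis Hio : is2 io At A.
Hypothesis Hip : vcomp io pi = vcomp be (hcomp (meta n) (id2 A)).
Hypothesis Hpi_io : vcomp pi io = id2 At.

Lemma WA_alg : is_alg n At (vcomp pi (vcomp be (hcomp (id2 (mt n)) io))).
Proof.
  pose proof WA_be_te as H1. pose proof WA_e_be as H2.
  destruct Hn as (Hmu & Heta & Hass & Hu1 & Hu2).
  nfh H1. nfh H2. pose proof Hip as Hip'. nfh Hip'.
  split; [|split].
  - ty.
  - nf.
    pose proof (f_equal (fun z => hcomp (id2 (mt n)) z) Hip') as H3; cbv beta in H3; nfh H3.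
    rw 2 2 H3. rw 1 3 H1. rw 1 2 Hba. swo 2. reflexivity.
  - nf. swi 2. rw 1 2 (eq_sym Hip'). rw 0 2 Hpi_io. reflexivity.
Qed.

Lemma WA_io_mor : vcomp io (vcomp pi (vcomp be (hcomp (id2 (mt n)) io))) = vcomp be (hcomp (id2 (mt n)) io).
Proof.
  pose proof WA_e_be as H2. pose proof Hip as Hip'.
  destruct Hn as (Hmu & Heta & Hass & Hu1 & Hu2).
  nfh H2. nfh Hip'. nf. rw 0 2 Hip'. rw 0 3 H2. reflexivity.
Qed.

Lemma WA_pi_mor : vcomp (vcomp pi (vcomp be (hcomp (id2 (mt n)) io))) (hcomp (id2 (mt n)) pi) = vcomp pi be.
Proof.
  pose proof WA_be_te as H1. pose proof Hip as Hip'.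
  destruct Hn as (Hmu & Heta & Hass & Hu1 & Hu2).
  nfh H1. nfh Hip'. nf.
  pose proof (f_equal (fun z => hcomp (id2 (mt n)) z) Hip') as H3; cbv beta in H3; nfh H3.
  rw 2 2 H3. rw 1 3 H1. reflexivity.
Qed.

End WA.

Section WAM.
Context {K : TwoCat} {HK : strict_2cat K}.
Variable n : monad K.
Hypothesis Hn : is_monad n.
Variables (l : K) (A : hom l (mk n)) (be : cell l (mk n)).
Hypothesis Hbe : is2 be (comp1 (mt n) A) A.
Hypothesis Hba : vcomp be (hcomp (id2 (mt n)) be) = vcomp be (hcomp (mmu n) (id2 A)).
Variables (At : hom l (mk n)) (pi io : cell l (mk n)).
Hypothesis Hpi : is2 pi A At.
Hypothesis Hio : is2 io At A.
Hypothesis Hip : vcomp io pi = vcomp be (hcomp (meta n) (id2 A)).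
Hypothesis Hpi_io : vcomp pi io = id2 At.
Variables (B : hom l (mk n)) (beB : cell l (mk n)).
Hypothesis HbeB : is2 beB (comp1 (mt n) B) B.
Hypothesis HbaB : vcomp beB (hcomp (id2 (mt n)) beB) = vcomp beB (hcomp (mmu n) (id2 B)).
Variables (Bt : hom l (mk n)) (piB ioB : cell l (mk n)).
Hypothesis HpiB : is2 piB B Bt.
Hypothesis HioB : is2 ioB Bt B.
Hypothesis HipB : vcomp ioB piB = vcomp beB (hcomp (meta n) (id2 B)).
Hypothesis Hpi_ioB : vcomp piB ioB = id2 Bt.
Variable g : cell l (mk n).
Hypothesis Hg : is2 g A B.
Hypothesis Hgm : vcomp beB (hcomp (id2 (mt n)) g) = vcomp g be.

Lemma WA_mor_e : vcomp g (vcomp be (hcomp (meta n) (id2 A))) = vcomp (vcomp beB (hcomp (meta n) (id2 B))) g.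
Proof.
  pose proof Hgm as Hgm'.
  destruct Hn as (Hmu & Heta & Hass & Hu1 & Hu2).
  nfh Hgm'. nf. rw 0 2 (eq_sym Hgm'). swi 1. reflexivity.
Qed.

Lemma WA_mor_split : is_alg_mor n At (vcomp pi (vcomp be (hcomp (id2 (mt n)) io)))
   Bt (vcomp piB (vcomp beB (hcomp (id2 (mt n)) ioB))) (vcomp piB (vcomp g io)).
Proof.
  pose proof (WA_be_te n Hn l B beB HbeB HbaB) as H1B.
  pose proof (WA_e_be n Hn l A be Hbe Hba) as H2.
  pose proof Hip as Hip'. pose proof HipB as HipB'. pose proof Hgm as Hgm'.
  destruct Hn as (Hmu & Heta & Hass & Hu1 & Hu2).
  nfh H1B. nfh H2. nfh Hip'. nfh HipB'. nfh Hgm'.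
  split; [split; ty|].
  nf.
  pose proof (f_equal (fun z => hcomp (id2 (mt n)) z) HipB') as H3; cbv beta in H3; nfh H3.
  rw 2 2 H3. rw 1 3 H1B. rw 1 2 Hgm'. rwr 2 2 Hip'. rwr 2 3 H2. reflexivity.
Qed.
End WAM.

Tactic Notation "wL" constr(L) "in" ident(H) :=
  apply (f_equal (fun z => hcomp (id2 L) z)) in H; cbv beta in H; nfh H.
Tactic Notation "wR" constr(R) "in" ident(H) :=
  apply (f_equal (fun z => hcomp z (id2 R))) in H; cbv beta in H; nfh H.


Section EMW.
Context {K : TwoCat} {HK : strict_2cat K}.

Lemma EMw1_id (m : monad K) : is_monad m -> is_EMw1 m m (id1 (mk m)) (id1w_psi m).
Proof.
  intros (Hmu & Heta & Hass & Hu1 & Hu2). unfold id1w_psi. split.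
  - ty.
  - nf. reflexivity.
Qed.

Lemma EMw1_comp (m1 m2 m3 : monad K) V psi V' psi' :
  is_monad m1 -> is_monad m2 -> is_monad m3 ->
  is_EMw1 m1 m2 V psi -> is_EMw1 m2 m3 V' psi' ->
  is_EMw1 m1 m3 (comp1 V' V) (comp1w_psi V' psi' V psi).
Proof.
  intros (Hmu1 & Heta1 & Hass1 & Hu11 & Hu21) (Hmu2 & Heta2 & Hass2 & Hu12 & Hu22)
         (Hmu3 & Heta3 & Hass3 & Hu13 & Hu23) [Hp Ep] [Hp' Ep'].
  unfold comp1w_psi. split.
  - ty.
  - nf. swo 2. wL V' in Ep. rw 0 3 Ep. wR V in Ep'. rw 1 3 Ep'. reflexivity.
Qed.

Lemma EMw1_unit (m m' : monad K) W phi :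
  is_monad m -> is_monad m' -> is_EMw1 m m' W phi ->
  vcomp (hcomp (id2 W) (mmu m)) (vcomp (hcomp phi (id2 (mt m)))
    (vcomp (hcomp (meta m') (id2 (comp1 W (mt m)))) phi)) = phi.
Proof.
  intros (Hmu1 & Heta1 & Hass1 & Hu11 & Hu21) (Hmu2 & Heta2 & Hass2 & Hu12 & Hu22) [Hp Ep].
  nf. swo 2. rw 0 3 Ep. wR W in Hu12. rw 1 2 Hu12. reflexivity.
Qed.

Lemma EMw2_id (m m' : monad K) W phi :
  is_monad m -> is_monad m' -> is_EMw1 m m' W phi ->
  is_EMw2 m m' W phi W phi (id2w m' W phi).
Proof.
  intros Hm Hm' HW. pose proof (EMw1_unit m m' W phi Hm Hm' HW) as U.
  destruct Hm as (Hmu1 & Heta1 & Hass1 & Hu11 & Hu21).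
  destruct Hm' as (Hmu2 & Heta2 & Hass2 & Hu12 & Hu22). destruct HW as [Hp Ep].
  unfold id2w. nfh U. split; [|split].
  - ty.
  - nf. rw 0 4 U. rwr 0 3 Ep. wR W in Hu22. rwr 1 2 Hu22. reflexivity.
  - nf. rwr 0 4 U. reflexivity.
Qed.

Lemma EMw2_vcomp (m m' : monad K) V psi W phi U chi rho tau :
  is_monad m -> is_monad m' -> is_EMw1 m m' V psi -> is_EMw1 m m' W phi -> is_EMw1 m m' U chi ->
  is_EMw2 m m' V psi W phi rho -> is_EMw2 m m' W phi U chi tau ->
  is_EMw2 m m' V psi U chi (vcomp2w m U tau rho).
Proof.
  intros (Hmu1 & Heta1 & Hass1 & Hu11 & Hu21) (Hmu2 & Heta2 & Hass2 & Hu12 & Hu22)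
    [Hp Ep] [Hf Ef] [Hc Ec] (Hr & Er1 & Er2) (Ht & Et1 & Et2).
  unfold vcomp2w. split; [|split].
  - ty.
  - nf. pose proof Hass1 as A1. wL U in A1. rw 0 2 A1. swi 1. nfh Er1. rw 2 3 Er1.
    swo 1. rw 0 2 (eq_sym A1). nfh Et1. wR (mt m) in Et1. rw 1 3 Et1.
    symmetry. swo 1. rw 0 2 (eq_sym A1). reflexivity.
  - nf. pose proof Hass1 as A1. wL U in A1. symmetry. swo 2. swo 1. rw 0 2 (eq_sym A1).
    nfh Et2. wR (mt m) in Et2. rw 1 4 (eq_sym Et2). reflexivity.
Qed.

Lemma EMw2_Q (m m' : monad K) V psi W phi rho :
  is_monad m -> is_monad m' -> is_EMw1 m m' V psi -> is_EMw1 m m' W phi ->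
  is_EMw2 m m' V psi W phi rho ->
  vcomp (hcomp (id2 W) (mmu m)) (vcomp (hcomp phi (id2 (mt m)))
    (hcomp (id2 (mt m')) (vcomp (hcomp (id2 W) (mmu m)) (vcomp (hcomp rho (id2 (mt m))) psi))))
  = vcomp (hcomp (id2 W) (mmu m)) (vcomp (hcomp rho (id2 (mt m))) (vcomp psi (hcomp (mmu m') (id2 V)))).
Proof.
  intros (Hmu1 & Heta1 & Hass1 & Hu11 & Hu21) (Hmu2 & Heta2 & Hass2 & Hu12 & Hu22)
    [Hp Ep] [Hf Ef] (Hr & Er1 & Er2).
  pose proof Hass1 as A1. wL W in A1.
  nfh Er1. pose proof Er1 as Er1'. wL (mt m') in Er1'.
  nf. rw 2 3 Er1'. swo 1. rw 0 2 (eq_sym A1).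
  symmetry. rw 0 3 Er1. swi 2. wR (mt m) in Ef. rw 1 2 (eq_sym Ef). reflexivity.
Qed.

Lemma EMw2_hcomp (m1 m2 m3 : monad K) V psi W phi rho V' psi' W' phi' rho' :
  is_monad m1 -> is_monad m2 -> is_monad m3 ->
  is_EMw1 m1 m2 V psi -> is_EMw1 m1 m2 W phi -> is_EMw1 m2 m3 V' psi' -> is_EMw1 m2 m3 W' phi' ->
  is_EMw2 m1 m2 V psi W phi rho -> is_EMw2 m2 m3 V' psi' W' phi' rho' ->
  is_EMw2 m1 m3 (comp1 V' V) (comp1w_psi V' psi' V psi) (comp1 W' W) (comp1w_psi W' phi' W phi)
    (hcomp2w m1 W' W V psi rho' rho).
Proof.
  intros Hm1 Hm2 Hm3 HV HW HV' HW' Hr Hr'.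
  pose proof (EMw2_Q m1 m2 V psi W phi rho Hm1 Hm2 HV HW Hr) as Q.
  destruct Hm1 as (Hmu1 & Heta1 & Hass1 & Hu11 & Hu21).
  destruct Hm2 as (Hmu2 & Heta2 & Hass2 & Hu12 & Hu22).
  destruct Hm3 as (Hmu3 & Heta3 & Hass3 & Hu13 & Hu23).
  destruct HV as [Hp Ep]. destruct HW as [Hf Ef]. destruct HV' as [Hp' Ep']. destruct HW' as [Hf' Ef'].
  destruct Hr as (Hr & Er1 & Er2). destruct Hr' as (Hr' & Er1' & Er2').
  nfh Q. wL W' in Q.
  unfold hcomp2w, comp1w_psi. split; [|split].
  - ty.
  - nf. pose proof Hass1 as A1. wL (comp1 W' W) in A1. rw 0 2 A1. swi 1. swo 4.
    wL W' in Ep. rw 2 3 Ep. nfh Er1'. wR V in Er1'. rw 3 3 Er1'. rw 0 4 (eq_sym Q).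
    symmetry. swo 2. swo 3. swo 4. reflexivity.
  - nf. symmetry. swo 3. swo 4. swo 5. swo 2. swo 3. swo 4. rw 0 5 Q.
    nfh Er2'. wR V in Er2'. rw 3 4 (eq_sym Er2'). reflexivity.
Qed.
End EMW.

Section EMJ.
Context {K : TwoCat} {HK : strict_2cat K}.
Variable EMc : EMchoice K.
Hypothesis HEM : EMchoice_ok EMc.

Definition Jf' (m : monad K) : hom (mk m) (JO EMc m) := Jf (EMc m).

Lemma EMf (m : monad K) : is_monad m ->
  mt m = comp1 (Jv' EMc m) (Jf' m) /\
  is2 (Jeps' EMc m) (comp1 (Jf' m) (Jv' EMc m)) (id1 (JO EMc m)) /\
  mmu m = hcomp (id2 (Jv' EMc m)) (hcomp (Jeps' EMc m) (id2 (Jf' m))) /\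
  vcomp (hcomp (id2 (Jv' EMc m)) (Jeps' EMc m)) (hcomp (meta m) (id2 (Jv' EMc m))) = id2 (Jv' EMc m) /\
  vcomp (hcomp (Jeps' EMc m) (id2 (Jf' m))) (hcomp (id2 (Jf' m)) (meta m)) = id2 (Jf' m).
Proof.
  intros Hm. destruct (HEM m Hm) as (E1 & E2 & E3 & E4 & E5 & _ & _).
  split; [exact E1|]. split; [exact E2|]. split; [|split; [exact E4|exact E5]].
  rewrite E3. apply wl_wr.
Qed.

Lemma vom_mor (m : monad K) (Hm : is_monad m) (l : K) (X Y : hom l (JO EMc m)) om :
  is2 om X Y ->
  vcomp (hcomp (id2 (Jv' EMc m)) (hcomp (Jeps' EMc m) (id2 Y)))
        (hcomp (id2 (mt m)) (hcomp (id2 (Jv' EMc m)) om)) =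
  vcomp (hcomp (id2 (Jv' EMc m)) om) (hcomp (id2 (Jv' EMc m)) (hcomp (Jeps' EMc m) (id2 X))).
Proof.
  intros Ho. destruct (EMf m Hm) as (Et & He & Emu & T1 & T2).
  assert (HE (mt m = comp1 (Jv' EMc m) (Jf' m))) by exact Et.
  nf. swo 0. reflexivity.
Qed.

Lemma faith (m : monad K) (Hm : is_monad m) (l : K) (X Y : hom l (JO EMc m)) om1 om2 :
  is2 om1 X Y -> is2 om2 X Y ->
  hcomp (id2 (Jv' EMc m)) om1 = hcomp (id2 (Jv' EMc m)) om2 -> om1 = om2.
Proof.
  intros H1 H2 E.
  destruct (HEM m Hm) as (E1 & E2 & E3 & E4 & E5 & _ & E7).
  assert (M : forall om, is2 om X Y -> is_alg_mor m (comp1 (Jv (EMc m)) X)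
      (hcomp (hcomp (id2 (Jv (EMc m))) (Jeps (EMc m))) (id2 X))
      (comp1 (Jv (EMc m)) Y) (hcomp (hcomp (id2 (Jv (EMc m))) (Jeps (EMc m))) (id2 Y))
      (hcomp (id2 (Jv (EMc m))) om)).
  { intros om Ho. split.
    - change (Jv (EMc m)) with (Jv' EMc m). ty.
    - pose proof (vom_mor m Hm l X Y om Ho) as V. rewrite !wl_wr. exact V. }
  destruct (E7 l X Y _ (M om1 H1)) as (om & [Ho Eo] & U).
  rewrite (U om1 (conj H1 eq_refl)).
  symmetry. apply U. split; [exact H2|]. symmetry. exact E.
Qed.

Lemma lift2 (m : monad K) (Hm : is_monad m) (l : K) (X Y : hom l (JO EMc m)) A B al be rho :
  A = comp1 (Jv' EMc m) X -> B = comp1 (Jv' EMc m) Y ->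
  al = hcomp (id2 (Jv' EMc m)) (hcomp (Jeps' EMc m) (id2 X)) ->
  be = hcomp (id2 (Jv' EMc m)) (hcomp (Jeps' EMc m) (id2 Y)) ->
  is_alg_mor m A al B be rho ->
  exists om, is2 om X Y /\ hcomp (id2 (Jv' EMc m)) om = rho.
Proof.
  intros -> -> -> -> M.
  destruct (HEM m Hm) as (E1 & E2 & E3 & E4 & E5 & _ & E7).
  destruct (E7 l X Y rho) as (om & [Ho Eo] & _).
  - rewrite !wl_wr. exact M.
  - exists om. split; assumption.
Qed.


Definition hatc (m : monad K) {k' : K} (W : hom (mk m) k') (x : cell (mk m) k') : cell (JO EMc m) k' :=
  vcomp (hcomp (id2 (comp1 W (Jv' EMc m))) (Jeps' EMc m)) (hcomp x (id2 (Jv' EMc m))).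

Lemma toHE (P : Prop) : P -> HE P. Proof. exact (fun x => x). Qed.

Ltac mon m Hm :=
  let H := fresh in pose proof (EMf m Hm) as H;
  let Et := fresh "Et" in let He := fresh "He" in let Emu := fresh "Emu" in
  let T1 := fresh "T1" in let T2 := fresh "T2" in
  destruct H as (Et & He & Emu & T1 & T2); apply toHE in Et; apply toHE in Emu;
  let H' := fresh in pose proof Hm as H';
  let Hmu := fresh "Hmu" in let Heta := fresh "Heta" in let Hass := fresh "Hass" in
  let Hu1 := fresh "Hu" in let Hu2 := fresh "Hu" in
  destruct H' as (Hmu & Heta & Hass & Hu1 & Hu2).

Lemma J_WA m m' V psi : is_monad m -> is_monad m' -> is_EMw1 m m' V psi ->
  is2 (hatc m V psi) (comp1 (mt m') (comp1 V (Jv' EMc m))) (comp1 V (Jv' EMc m)) /\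
  vcomp (hatc m V psi) (hcomp (id2 (mt m')) (hatc m V psi)) =
  vcomp (hatc m V psi) (hcomp (mmu m') (id2 (comp1 V (Jv' EMc m)))).
Proof.
  intros Hm Hm' [Hp Ep]. mon m Hm. mon m' Hm'. unfold hatc. split.
  - ty.
  - nf. swo 1. swo 0. nfh Ep. wR (Jv' EMc m) in Ep. rw 1 3 Ep. reflexivity.
Qed.

Lemma J_mor m m' V psi W phi rho : is_monad m -> is_monad m' -> is_EMw1 m m' V psi ->
  is_EMw1 m m' W phi -> is_EMw2 m m' V psi W phi rho ->
  vcomp (hatc m W phi) (hcomp (id2 (mt m')) (hatc m W rho)) = vcomp (hatc m W rho) (hatc m V psi).
Proof.
  intros Hm Hm' [Hp Ep] [Hf Ef] (Hr & Er1 & Er2). mon m Hm. mon m' Hm'. unfold hatc.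
  symmetry. nf. swo 1. swo 0. nfh Er1. wR (Jv' EMc m) in Er1. rw 1 3 Er1. swi 0. swi 1.
  reflexivity.
Qed.

Lemma J_e m m' V psi W phi rho : is_monad m -> is_monad m' -> is_EMw1 m m' V psi ->
  is_EMw1 m m' W phi -> is_EMw2 m m' V psi W phi rho ->
  vcomp (vcomp (hatc m W phi) (hcomp (meta m') (id2 (comp1 W (Jv' EMc m))))) (hatc m W rho)
  = hatc m W rho.
Proof.
  intros Hm Hm' [Hp Ep] [Hf Ef] (Hr & Er1 & Er2). mon m Hm. mon m' Hm'. unfold hatc.
  nf. swo 2. swo 1. swo 0. nfh Er2. wR (Jv' EMc m) in Er2. rw 1 4 (eq_sym Er2). reflexivity.
Qed.


Lemma J_vcomp m (m' : monad K) V W U (rho tau : cell (mk m) (mk m')) : is_monad m ->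
  is2 rho V (comp1 W (mt m)) -> is2 tau W (comp1 U (mt m)) ->
  hatc m U (vcomp2w m U tau rho) = vcomp (hatc m U tau) (hatc m W rho).
Proof.
  intros Hm Hr Ht. mon m Hm. unfold hatc, vcomp2w. nf. symmetry. swo 1. swo 0. reflexivity.
Qed.

Lemma J_hcomp m1 m2 (m3 : monad K) V psi W (V' W' : hom (mk m2) (mk m3)) rho rho' :
  is_monad m1 -> is_monad m2 ->
  is2 psi (comp1 (mt m2) V) (comp1 V (mt m1)) ->
  is2 rho V (comp1 W (mt m1)) -> is2 rho' V' (comp1 W' (mt m2)) ->
  hatc m1 (comp1 W' W) (hcomp2w m1 W' W V psi rho' rho) =
  vcomp (hcomp (id2 W') (hatc m1 W rho)) (vcomp (hcomp (id2 W') (hatc m1 V psi))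
     (hcomp rho' (id2 (comp1 V (Jv' EMc m1))))).
Proof.
  intros Hm1 Hm2 Hp Hr Hr'. mon m1 Hm1. mon m2 Hm2. unfold hatc, hcomp2w. nf. symmetry.
  swo 1. swo 0. reflexivity.
Qed.

Lemma lift2' (m : monad K) (Hm : is_monad m) (l : K) (X Y : hom l (JO EMc m)) A B al be rho :
  is_alg_mor m A al B be rho ->
  A = comp1 (Jv' EMc m) X -> B = comp1 (Jv' EMc m) Y ->
  al = hcomp (id2 (Jv' EMc m)) (hcomp (Jeps' EMc m) (id2 X)) ->
  be = hcomp (id2 (Jv' EMc m)) (hcomp (Jeps' EMc m) (id2 Y)) ->
  exists om, is2 om X Y /\ hcomp (id2 (Jv' EMc m)) om = rho.
Proof. intros M H1 H2 H3 H4. exact (lift2 m Hm l X Y A B al be rho H1 H2 H3 H4 M). Qed.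
End EMJ.

Section WAS.
Context {K : TwoCat} {HK : strict_2cat K}.

Definition WAS (n : monad K) (l : K) (A : hom l (mk n)) (be : cell l (mk n))
  (At : hom l (mk n)) (pi io : cell l (mk n)) : Prop :=
  is2 be (comp1 (mt n) A) A /\
  vcomp be (hcomp (id2 (mt n)) be) = vcomp be (hcomp (mmu n) (id2 A)) /\
  is2 pi A At /\ is2 io At A /\
  vcomp io pi = vcomp be (hcomp (meta n) (id2 A)) /\ vcomp pi io = id2 At.

Lemma WAS_wh n (Hn : is_monad n) l A be At pi io l' (X : hom l' l) :
  WAS n l A be At pi io ->
  WAS n l' (comp1 A X) (hcomp be (id2 X)) (comp1 At X) (hcomp pi (id2 X)) (hcomp io (id2 X)).
Proof.
  intros (H1 & H2 & H3 & H4 & H5 & H6). destruct Hn as (Hmu & Heta & _).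
  split; [ty|]. split; [|split; [ty|split; [ty|split]]].
  - wR X in H2. nf. exact H2.
  - wR X in H5. nf. exact H5.
  - wR X in H6. nf. exact H6.
Qed.

Lemma WAS_mor n (Hn : is_monad n) l A be At pi io B beB Bt piB ioB g :
  WAS n l A be At pi io -> WAS n l B beB Bt piB ioB -> is2 g A B ->
  vcomp beB (hcomp (id2 (mt n)) g) = vcomp g be ->
  is_alg_mor n At (vcomp pi (vcomp be (hcomp (id2 (mt n)) io)))
    Bt (vcomp piB (vcomp beB (hcomp (id2 (mt n)) ioB))) (vcomp piB (vcomp g io)).
Proof.
  intros (H1 & H2 & H3 & H4 & H5 & H6) (G1 & G2 & G3 & G4 & G5 & G6) Hg Hgm.
  exact (WA_mor_split n Hn l A be H1 H2 At pi io H3 H4 H5 B beB G1 G2 Bt piB ioB G3 G4 G5 g Hg Hgm).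
Qed.

Lemma WAS_e_be n (Hn : is_monad n) l A be At pi io : WAS n l A be At pi io ->
  vcomp (vcomp be (hcomp (meta n) (id2 A))) be = be.
Proof. intros (H1 & H2 & _). exact (WA_e_be n Hn l A be H1 H2). Qed.
Lemma WAS_be_te n (Hn : is_monad n) l A be At pi io : WAS n l A be At pi io ->
  vcomp be (hcomp (id2 (mt n)) (vcomp be (hcomp (meta n) (id2 A)))) = be.
Proof. intros (H1 & H2 & _). exact (WA_be_te n Hn l A be H1 H2). Qed.
Lemma WAS_io_mor n (Hn : is_monad n) l A be At pi io : WAS n l A be At pi io ->
  vcomp io (vcomp pi (vcomp be (hcomp (id2 (mt n)) io))) = vcomp be (hcomp (id2 (mt n)) io).
Proof. intros (H1 & H2 & H3 & H4 & H5 & H6). exact (WA_io_mor n Hn l A be H1 H2 At pi io H3 H4 H5). Qed.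
Lemma WAS_pi_mor n (Hn : is_monad n) l A be At pi io : WAS n l A be At pi io ->
  vcomp (vcomp pi (vcomp be (hcomp (id2 (mt n)) io))) (hcomp (id2 (mt n)) pi) = vcomp pi be.
Proof. intros (H1 & H2 & H3 & H4 & H5 & H6). exact (WA_pi_mor n Hn l A be H1 H2 At pi io H3 H4 H5). Qed.
Lemma WAS_alg n (Hn : is_monad n) l A be At pi io : WAS n l A be At pi io ->
  is_alg n At (vcomp pi (vcomp be (hcomp (id2 (mt n)) io))).
Proof. intros (H1 & H2 & H3 & H4 & H5 & H6). exact (WA_alg n Hn l A be H1 H2 At pi io H3 H4 H5 H6). Qed.
Lemma WAS_mor_e n (Hn : is_monad n) l A be At pi io B beB Bt piB ioB g :
  WAS n l A be At pi io -> WAS n l B beB Bt piB ioB -> is2 g A B ->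
  vcomp beB (hcomp (id2 (mt n)) g) = vcomp g be ->
  vcomp g (vcomp be (hcomp (meta n) (id2 A))) = vcomp (vcomp beB (hcomp (meta n) (id2 B))) g.
Proof.
  intros (H1 & H2 & H3 & H4 & H5 & H6) (G1 & G2 & G3 & G4 & G5 & G6) Hg Hgm.
  exact (WA_mor_e n Hn l A be H1 B beB G1 g Hg Hgm).
Qed.
End WAS.

Section JW.
Context {K : TwoCat} {HK : strict_2cat K}.
Variable EMc : EMchoice K.
Hypothesis HEM : EMchoice_ok EMc.
Variable spl : split_choice EMc.
Hypothesis Hspl : split_choice_ok EMc spl.
Variables (F1 : J1type EMc) (F2 : J2type EMc).
Hypothesis HJ : is_Jw EMc spl F1 F2.

Ltac mon m Hm :=
  let H := fresh in pose proof (EMf EMc HEM m Hm) as H;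
  let Et := fresh "Et" in let He := fresh "He" in let Emu := fresh "Emu" in
  let T1 := fresh "T1" in let T2 := fresh "T2" in
  destruct H as (Et & He & Emu & T1 & T2); apply toHE in Et; apply toHE in Emu;
  let H' := fresh in pose proof Hm as H';
  let Hmu := fresh "Hmu" in let Heta := fresh "Heta" in let Hass := fresh "Hass" in
  let Hu1 := fresh "Hu" in let Hu2 := fresh "Hu" in
  destruct H' as (Hmu & Heta & Hass & Hu1 & Hu2).

Lemma J_WAS m m' V psi : is_monad m -> is_monad m' -> is_EMw1 m m' V psi ->
  WAS m' (JO EMc m) (comp1 V (Jv' EMc m)) (hatc EMc m V psi)
    (sobj (spl m m' V psi)) (spi (spl m m' V psi)) (siota (spl m m' V psi)).
Proof.
  intros Hm Hm' HV. destruct (J_WA EMc HEM m m' V psi Hm Hm' HV) as [W1 W2].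
  destruct (Hspl m m' V psi Hm Hm' HV) as (S1 & S2 & S3 & S4).
  pose proof HV as [Hp Ep]. mon m Hm. mon m' Hm'.
  split; [exact W1|]. split; [exact W2|]. split; [exact S1|]. split; [exact S2|].
  split; [|exact S4]. rewrite S3. unfold idemw, hatc. nf. reflexivity.
Qed.

Tactic Notation "one" constr(m) constr(m') constr(V) constr(psi) constr(Hm) constr(Hm') constr(HV)
   "as" ident(W) ident(Ev) ident(Ea) :=
  pose proof (J_WAS m m' V psi Hm Hm' HV) as W;
  pose proof (proj1 HJ m m' V psi Hm Hm' HV) as Ev; destruct Ev as [Ev Ea];
  apply eq_sym in Ev; apply toHE in Ev;
  let W' := fresh in pose proof W as W';
  let Hpi := fresh "Hpi" in let Hio := fresh "Hio" in
  destruct W' as (_ & _ & Hpi & Hio & _ & _);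
  let Hps := fresh "Hps" in pose proof (proj1 HV) as Hps.

Definition gam m1 m2 m3 V' psi' V psi : cell (JO EMc m1) (mk m3) :=
  vcomp (spi (spl m1 m3 (comp1 V' V) (comp1w_psi V' psi' V psi)))
    (vcomp (hcomp (id2 V') (siota (spl m1 m2 V psi)))
       (hcomp (siota (spl m2 m3 V' psi')) (id2 (F1 m1 m2 V psi)))).

Tactic Notation "setup3" constr(m1) constr(m2) constr(m3) constr(V) constr(psi) constr(V') constr(psi')
  constr(Hm1) constr(Hm2) constr(Hm3) constr(HV) constr(HV') "as" ident(HVV) ident(W) ident(W') ident(W'')
  ident(WX) ident(Ev) ident(Ev') ident(Ev'') ident(Ea) ident(Ea') ident(Ea'') :=
  pose proof (EMw1_comp m1 m2 m3 V psi V' psi' Hm1 Hm2 Hm3 HV HV') as HVV;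
  one m1 m2 V psi Hm1 Hm2 HV as W Ev Ea;
  one m2 m3 V' psi' Hm2 Hm3 HV' as W' Ev' Ea';
  one m1 m3 (comp1 V' V) (comp1w_psi V' psi' V psi) Hm1 Hm3 HVV as W'' Ev'' Ea'';
  pose proof (WAS_wh m3 Hm3 _ _ _ _ _ _ _ (F1 m1 m2 V psi) W') as WX;
  let Hp := fresh "Hp" in let Ep := fresh "Ep" in pose proof HV as [Hp Ep];
  let Hp := fresh "Hp" in let Ep := fresh "Ep" in pose proof HV' as [Hp Ep];
  mon m1 Hm1; mon m2 Hm2; mon m3 Hm3.

Lemma gam_g m1 m2 m3 V psi V' psi' :
  is_monad m1 -> is_monad m2 -> is_monad m3 -> is_EMw1 m1 m2 V psi -> is_EMw1 m2 m3 V' psi' ->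
  vcomp (hatc EMc m1 (comp1 V' V) (comp1w_psi V' psi' V psi))
        (hcomp (id2 (mt m3)) (hcomp (id2 V') (siota (spl m1 m2 V psi)))) =
  vcomp (hcomp (id2 V') (siota (spl m1 m2 V psi)))
        (hcomp (hatc EMc m2 V' psi') (id2 (F1 m1 m2 V psi))).
Proof.
  intros Hm1 Hm2 Hm3 HV HV'.
  pose proof (WAS_io_mor m2 Hm2 _ _ _ _ _ _ (J_WAS m1 m2 V psi Hm1 Hm2 HV)) as IOM.
  setup3 m1 m2 m3 V psi V' psi' Hm1 Hm2 Hm3 HV HV' as HVV W W' W'' WX Ev Ev' Ev'' Ea Ea' Ea''.
  unfold hatc, comp1w_psi. nf. swo 2. unfold hatc in IOM. nfh IOM. wL V' in IOM.
  rw 0 3 (eq_sym IOM). nfh Ea. wL V' in Ea. rw 1 4 (eq_sym Ea). reflexivity.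
Qed.

Lemma del_g m1 m2 m3 V psi V' psi' :
  is_monad m1 -> is_monad m2 -> is_monad m3 -> is_EMw1 m1 m2 V psi -> is_EMw1 m2 m3 V' psi' ->
  vcomp (hcomp (hatc EMc m2 V' psi') (id2 (F1 m1 m2 V psi)))
        (hcomp (id2 (mt m3)) (hcomp (id2 V') (spi (spl m1 m2 V psi)))) =
  vcomp (hcomp (id2 V') (spi (spl m1 m2 V psi)))
        (hatc EMc m1 (comp1 V' V) (comp1w_psi V' psi' V psi)).
Proof.
  intros Hm1 Hm2 Hm3 HV HV'.
  pose proof (WAS_pi_mor m2 Hm2 _ _ _ _ _ _ (J_WAS m1 m2 V psi Hm1 Hm2 HV)) as PM.
  setup3 m1 m2 m3 V psi V' psi' Hm1 Hm2 Hm3 HV HV' as HVV W W' W'' WX Ev Ev' Ev'' Ea Ea' Ea''.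
  unfold hatc, comp1w_psi. nf. symmetry. unfold hatc in PM. nfh PM. wL V' in PM.
  rw 0 3 (eq_sym PM). nfh Ea. wL V' in Ea. rw 0 4 (eq_sym Ea). swi 1. reflexivity.
Qed.

Lemma gam_ex m1 m2 m3 V psi V' psi' :
  is_monad m1 -> is_monad m2 -> is_monad m3 -> is_EMw1 m1 m2 V psi -> is_EMw1 m2 m3 V' psi' ->
  exists om, is2 om (comp1 (F1 m2 m3 V' psi') (F1 m1 m2 V psi))
                 (F1 m1 m3 (comp1 V' V) (comp1w_psi V' psi' V psi)) /\
             hcomp (id2 (Jv' EMc m3)) om = gam m1 m2 m3 V' psi' V psi.
Proof.
  intros Hm1 Hm2 Hm3 HV HV'.
  pose proof (gam_g m1 m2 m3 V psi V' psi' Hm1 Hm2 Hm3 HV HV') as Hgm.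
  setup3 m1 m2 m3 V psi V' psi' Hm1 Hm2 Hm3 HV HV' as HVV W W' W'' WX Ev Ev' Ev'' Ea Ea' Ea''.
  assert (Hg : is2 (hcomp (id2 V') (siota (spl m1 m2 V psi)))
                 (comp1 (comp1 V' (Jv' EMc m2)) (F1 m1 m2 V psi)) (comp1 (comp1 V' V) (Jv' EMc m1))).
  { ty. }
  pose proof (WAS_mor m3 Hm3 _ _ _ _ _ _ _ _ _ _ _ _ WX W'' Hg Hgm) as M.
  eapply (lift2 EMc HEM m3 Hm3); [| | | |exact M].
  - homeq.
  - homeq.
  - nfh Ea'. wR (F1 m1 m2 V psi) in Ea'. unfold hatc. nf. rewrite Ea'. reflexivity.
  - nfh Ea''. unfold hatc. nf. rewrite Ea''. reflexivity.
Qed.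

Definition del m1 m2 m3 V' psi' V psi : cell (JO EMc m1) (mk m3) :=
  vcomp (hcomp (spi (spl m2 m3 V' psi')) (id2 (F1 m1 m2 V psi)))
    (vcomp (hcomp (id2 V') (spi (spl m1 m2 V psi)))
       (siota (spl m1 m3 (comp1 V' V) (comp1w_psi V' psi' V psi)))).

Lemma del_ex m1 m2 m3 V psi V' psi' :
  is_monad m1 -> is_monad m2 -> is_monad m3 -> is_EMw1 m1 m2 V psi -> is_EMw1 m2 m3 V' psi' ->
  exists om, is2 om (F1 m1 m3 (comp1 V' V) (comp1w_psi V' psi' V psi))
                    (comp1 (F1 m2 m3 V' psi') (F1 m1 m2 V psi)) /\
             hcomp (id2 (Jv' EMc m3)) om = del m1 m2 m3 V' psi' V psi.
Proof.
  intros Hm1 Hm2 Hm3 HV HV'.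
  pose proof (del_g m1 m2 m3 V psi V' psi' Hm1 Hm2 Hm3 HV HV') as Hgm.
  setup3 m1 m2 m3 V psi V' psi' Hm1 Hm2 Hm3 HV HV' as HVV W W' W'' WX Ev Ev' Ev'' Ea Ea' Ea''.
  assert (Hg : is2 (hcomp (id2 V') (spi (spl m1 m2 V psi)))
                 (comp1 (comp1 V' V) (Jv' EMc m1)) (comp1 (comp1 V' (Jv' EMc m2)) (F1 m1 m2 V psi))).
  { ty. }
  pose proof (WAS_mor m3 Hm3 _ _ _ _ _ _ _ _ _ _ _ _ W'' WX Hg Hgm) as M.
  eapply (lift2 EMc HEM m3 Hm3); [| | | |exact M].
  - homeq.
  - homeq.
  - nfh Ea''. unfold hatc. nf. rewrite Ea''. reflexivity.
  - nfh Ea'. wR (F1 m1 m2 V psi) in Ea'. unfold hatc. nf. rewrite Ea'. reflexivity.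
Qed.

Lemma triv_WAS m : is_monad m ->
  WAS m (JO EMc m) (Jv' EMc m) (hcomp (id2 (Jv' EMc m)) (Jeps' EMc m)) (Jv' EMc m)
      (id2 (Jv' EMc m)) (id2 (Jv' EMc m)).
Proof.
  intros Hm. mon m Hm. split; [ty|]. split; [|split; [ty|split; [ty|split]]].
  - nf. swo 0. reflexivity.
  - nfh T1. nf. rewrite T1. reflexivity.
  - nf. reflexivity.
Qed.

Lemma uni_ex m : is_monad m ->
  exists om, is2 om (id1 (JO EMc m)) (F1 m m (id1 (mk m)) (id1w_psi m)) /\
    hcomp (id2 (Jv' EMc m)) om = spi (spl m m (id1 (mk m)) (id1w_psi m)).
Proof.
  intros Hm. pose proof (EMw1_id m Hm) as HV0. pose proof (triv_WAS m Hm) as WT.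
  one m m (id1 (mk m)) (id1w_psi m) Hm Hm HV0 as W0 Ev0 Ea0. mon m Hm.
  assert (Hg : is2 (id2 (Jv' EMc m)) (Jv' EMc m) (comp1 (id1 (mk m)) (Jv' EMc m))) by ty.
  assert (Hgm : vcomp (hatc EMc m (id1 (mk m)) (id1w_psi m)) (hcomp (id2 (mt m)) (id2 (Jv' EMc m)))
                = vcomp (id2 (Jv' EMc m)) (hcomp (id2 (Jv' EMc m)) (Jeps' EMc m))).
  { unfold hatc, id1w_psi. nf. reflexivity. }
  pose proof (WAS_mor m Hm _ _ _ _ _ _ _ _ _ _ _ _ WT W0 Hg Hgm) as M.
  pose proof (lift2' EMc HEM m Hm _ (id1 (JO EMc m)) (F1 m m (id1 (mk m)) (id1w_psi m)) _ _ _ _ _ M) as Ex.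
  destruct Ex as (om & Ho & Eo).
  - homeq.
  - homeq.
  - nf. reflexivity.
  - nfh Ea0; unfold hatc; nf; rewrite Ea0; reflexivity.
  - exists om. split; [exact Ho|]. rewrite Eo. nf. reflexivity.
Qed.

Lemma uni'_ex m : is_monad m ->
  exists om, is2 om (F1 m m (id1 (mk m)) (id1w_psi m)) (id1 (JO EMc m)) /\
    hcomp (id2 (Jv' EMc m)) om = siota (spl m m (id1 (mk m)) (id1w_psi m)).
Proof.
  intros Hm. pose proof (EMw1_id m Hm) as HV0. pose proof (triv_WAS m Hm) as WT.
  one m m (id1 (mk m)) (id1w_psi m) Hm Hm HV0 as W0 Ev0 Ea0. mon m Hm.
  assert (Hg : is2 (id2 (Jv' EMc m)) (comp1 (id1 (mk m)) (Jv' EMc m)) (Jv' EMc m)) by ty.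
  assert (Hgm : vcomp (hcomp (id2 (Jv' EMc m)) (Jeps' EMc m)) (hcomp (id2 (mt m)) (id2 (Jv' EMc m)))
                = vcomp (id2 (Jv' EMc m)) (hatc EMc m (id1 (mk m)) (id1w_psi m))).
  { unfold hatc, id1w_psi. nf. reflexivity. }
  pose proof (WAS_mor m Hm _ _ _ _ _ _ _ _ _ _ _ _ W0 WT Hg Hgm) as M.
  pose proof (lift2' EMc HEM m Hm _ (F1 m m (id1 (mk m)) (id1w_psi m)) (id1 (JO EMc m)) _ _ _ _ _ M) as Ex.
  destruct Ex as (om & Ho & Eo).
  - homeq.
  - homeq.
  - nfh Ea0; unfold hatc; nf; rewrite Ea0; reflexivity.
  - nf. reflexivity.
  - exists om. split; [exact Ho|]. rewrite Eo. nf. reflexivity.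
Qed.

Definition uP m om : Prop := is_monad m ->
  is2 om (id1 (JO EMc m)) (F1 m m (id1 (mk m)) (id1w_psi m)) /\
  hcomp (id2 (Jv' EMc m)) om = spi (spl m m (id1 (mk m)) (id1w_psi m)).
Definition uu : Utype EMc := fun m => epsilon (inhabits (id2 (id1 (JO EMc m)))) (uP m).
Lemma uu_spec m : is_monad m ->
  is2 (uu m) (id1 (JO EMc m)) (F1 m m (id1 (mk m)) (id1w_psi m)) /\
  hcomp (id2 (Jv' EMc m)) (uu m) = spi (spl m m (id1 (mk m)) (id1w_psi m)).
Proof.
  intros Hm. apply (epsilon_spec _ (uP m)); [|exact Hm].
  destruct (uni_ex m Hm) as (om & H1 & H2). exists om. intros _. auto.
Qed.

Definition cP m1 m2 m3 V' psi' V psi om : Prop :=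
  is_monad m1 -> is_monad m2 -> is_monad m3 -> is_EMw1 m1 m2 V psi -> is_EMw1 m2 m3 V' psi' ->
  is2 om (comp1 (F1 m2 m3 V' psi') (F1 m1 m2 V psi))
         (F1 m1 m3 (comp1 V' V) (comp1w_psi V' psi' V psi)) /\
  hcomp (id2 (Jv' EMc m3)) om = gam m1 m2 m3 V' psi' V psi.
Definition cc : Ctype EMc := fun m1 m2 m3 V' psi' V psi =>
  epsilon (inhabits (id2 (F1 m1 m3 (comp1 V' V) (comp1w_psi V' psi' V psi))))
    (cP m1 m2 m3 V' psi' V psi).
Lemma cc_spec m1 m2 m3 V psi V' psi' :
  is_monad m1 -> is_monad m2 -> is_monad m3 -> is_EMw1 m1 m2 V psi -> is_EMw1 m2 m3 V' psi' ->
  is2 (cc m1 m2 m3 V' psi' V psi) (comp1 (F1 m2 m3 V' psi') (F1 m1 m2 V psi))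
         (F1 m1 m3 (comp1 V' V) (comp1w_psi V' psi' V psi)) /\
  hcomp (id2 (Jv' EMc m3)) (cc m1 m2 m3 V' psi' V psi) = gam m1 m2 m3 V' psi' V psi.
Proof.
  intros Hm1 Hm2 Hm3 HV HV'. apply (epsilon_spec _ (cP m1 m2 m3 V' psi' V psi)); auto.
  destruct (gam_ex m1 m2 m3 V psi V' psi' Hm1 Hm2 Hm3 HV HV') as (om & H1 & H2).
  exists om. intros _ _ _ _ _. auto.
Qed.

End JW.

Section JW2.
Context {K : TwoCat} {HK : strict_2cat K}.
Variable EMc : EMchoice K.
Hypothesis HEM : EMchoice_ok EMc.
Variable spl : split_choice EMc.
Hypothesis Hspl : split_choice_ok EMc spl.
Variables (F1 : J1type EMc) (F2 : J2type EMc).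
Hypothesis HJ : is_Jw EMc spl F1 F2.

Ltac mon m Hm :=
  let H := fresh in pose proof (EMf EMc HEM m Hm) as H;
  let Et := fresh "Et" in let He := fresh "He" in let Emu := fresh "Emu" in
  let T1 := fresh "T1" in let T2 := fresh "T2" in
  destruct H as (Et & He & Emu & T1 & T2); apply toHE in Et; apply toHE in Emu;
  let H' := fresh in pose proof Hm as H';
  let Hmu := fresh "Hmu" in let Heta := fresh "Heta" in let Hass := fresh "Hass" in
  let Hu1 := fresh "Hu" in let Hu2 := fresh "Hu" in
  destruct H' as (Hmu & Heta & Hass & Hu1 & Hu2).

Tactic Notation "one" constr(m) constr(m') constr(V) constr(psi) constr(Hm) constr(Hm') constr(HV)
   "as" ident(W) ident(Ev) ident(Ea) :=
  pose proof (J_WAS EMc HEM spl Hspl m m' V psi Hm Hm' HV) as W;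
  pose proof (proj1 HJ m m' V psi Hm Hm' HV) as Ev; destruct Ev as [Ev Ea];
  apply eq_sym in Ev; apply toHE in Ev;
  let W' := fresh in pose proof W as W';
  let Hpi := fresh "Hpi" in let Hio := fresh "Hio" in
  destruct W' as (_ & _ & Hpi & Hio & _ & _);
  let Hps := fresh "Hps" in pose proof (proj1 HV) as Hps.

Tactic Notation "setup3" constr(m1) constr(m2) constr(m3) constr(V) constr(psi) constr(V') constr(psi')
  constr(Hm1) constr(Hm2) constr(Hm3) constr(HV) constr(HV') "as" ident(HVV) ident(W) ident(W') ident(W'')
  ident(WX) ident(Ev) ident(Ev') ident(Ev'') ident(Ea) ident(Ea') ident(Ea'') :=
  pose proof (EMw1_comp m1 m2 m3 V psi V' psi' Hm1 Hm2 Hm3 HV HV') as HVV;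
  one m1 m2 V psi Hm1 Hm2 HV as W Ev Ea;
  one m2 m3 V' psi' Hm2 Hm3 HV' as W' Ev' Ea';
  one m1 m3 (comp1 V' V) (comp1w_psi V' psi' V psi) Hm1 Hm3 HVV as W'' Ev'' Ea'';
  pose proof (WAS_wh m3 Hm3 _ _ _ _ _ _ _ (F1 m1 m2 V psi) W') as WX;
  let Hp := fresh "Hp" in let Ep := fresh "Ep" in pose proof HV as [Hp Ep];
  let Hp := fresh "Hp" in let Ep := fresh "Ep" in pose proof HV' as [Hp Ep];
  mon m1 Hm1; mon m2 Hm2; mon m3 Hm3.


Notation ccF := (cc EMc spl F1).
Notation uuF := (uu EMc spl F1).
Notation gamF := (gam EMc spl F1).
Notation delF := (del EMc spl F1).

Lemma hatc_id m : is_monad m -> hatc EMc m (id1 (mk m)) (id1w_psi m) = hcomp (id2 (Jv' EMc m)) (Jeps' EMc m).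
Proof. intros Hm. mon m Hm. unfold hatc, id1w_psi. nf. reflexivity. Qed.

Lemma hatc_comp m1 m2 (m3 : monad K) V psi (V' : hom (mk m2) (mk m3)) psi' :
  is_monad m1 -> is2 psi (comp1 (mt m2) V) (comp1 V (mt m1)) ->
  is2 psi' (comp1 (mt m3) V') (comp1 V' (mt m2)) ->
  hatc EMc m1 (comp1 V' V) (comp1w_psi V' psi' V psi) =
  vcomp (hcomp (id2 V') (hatc EMc m1 V psi)) (hcomp psi' (id2 (comp1 V (Jv' EMc m1)))).
Proof. intros Hm1 Hp Hp'. mon m1 Hm1. unfold hatc, comp1w_psi. nf. reflexivity. Qed.

Lemma uu_iso m : is_monad m -> is_iso2 (uuF m) (id1 (JO EMc m)) (F1 m m (id1 (mk m)) (id1w_psi m)).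
Proof.
  intros Hm. destruct (uu_spec EMc HEM spl Hspl F1 F2 HJ m Hm) as [Hu Eu].
  destruct (uni'_ex EMc HEM spl Hspl F1 F2 HJ m Hm) as (om' & Ho' & Eo').
  pose proof (EMw1_id m Hm) as HV0.
  one m m (id1 (mk m)) (id1w_psi m) Hm Hm HV0 as W0 Ev0 Ea0.
  destruct W0 as (_ & _ & _ & _ & Hip0 & Hpiio0). rewrite (hatc_id m Hm) in Hip0.
  mon m Hm.
  split; [exact Hu|]. exists om'. split; [exact Ho'|]. split.
  - apply (faith EMc HEM m Hm _ (id1 (JO EMc m)) (id1 (JO EMc m))); [ty|ty|].
    nf. rewrite Eo', Eu. nfh Hip0. rewrite Hip0. nfh T1. rewrite T1. reflexivity.
  - apply (faith EMc HEM m Hm _ (F1 m m (id1 (mk m)) (id1w_psi m)) (F1 m m (id1 (mk m)) (id1w_psi m))); [ty|ty|].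
    nf. rewrite Eu, Eo'. nfh Hpiio0. rewrite Hpiio0. reflexivity.
Qed.

Lemma cc_iso m1 m2 m3 V psi V' psi' :
  is_monad m1 -> is_monad m2 -> is_monad m3 -> is_EMw1 m1 m2 V psi -> is_EMw1 m2 m3 V' psi' ->
  is_iso2 (ccF m1 m2 m3 V' psi' V psi) (comp1 (F1 m2 m3 V' psi') (F1 m1 m2 V psi))
          (F1 m1 m3 (comp1 V' V) (comp1w_psi V' psi' V psi)).
Proof.
  intros Hm1 Hm2 Hm3 HV HV'.
  destruct (cc_spec EMc HEM spl Hspl F1 F2 HJ m1 m2 m3 V psi V' psi' Hm1 Hm2 Hm3 HV HV') as [Hc Ec].
  destruct (del_ex EMc HEM spl Hspl F1 F2 HJ m1 m2 m3 V psi V' psi' Hm1 Hm2 Hm3 HV HV') as (om' & Ho' & Eo').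
  pose proof (gam_g EMc HEM spl Hspl F1 F2 HJ m1 m2 m3 V psi V' psi' Hm1 Hm2 Hm3 HV HV') as Gg.
  pose proof (del_g EMc HEM spl Hspl F1 F2 HJ m1 m2 m3 V psi V' psi' Hm1 Hm2 Hm3 HV HV') as Dg.
  setup3 m1 m2 m3 V psi V' psi' Hm1 Hm2 Hm3 HV HV' as HVV W W' W'' WX Ev Ev' Ev'' Ea Ea' Ea''.
  assert (Hg : is2 (hcomp (id2 V') (siota (spl m1 m2 V psi)))
                 (comp1 (comp1 V' (Jv' EMc m2)) (F1 m1 m2 V psi)) (comp1 (comp1 V' V) (Jv' EMc m1))) by ty.
  assert (Hg' : is2 (hcomp (id2 V') (spi (spl m1 m2 V psi)))
                 (comp1 (comp1 V' V) (Jv' EMc m1)) (comp1 (comp1 V' (Jv' EMc m2)) (F1 m1 m2 V psi))) by ty.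
  pose proof (WAS_mor_e m3 Hm3 _ _ _ _ _ _ _ _ _ _ _ _ WX W'' Hg Gg) as ME.
  pose proof (WAS_mor_e m3 Hm3 _ _ _ _ _ _ _ _ _ _ _ _ W'' WX Hg' Dg) as ME'.
  pose proof (WAS_e_be m2 Hm2 _ _ _ _ _ _ W) as EB.
  destruct W as (_ & _ & _ & _ & Hip & Hpiio).
  destruct W' as (_ & _ & _ & _ & Hip' & Hpiio').
  destruct W'' as (_ & _ & _ & _ & Hip'' & Hpiio'').
  rewrite (hatc_comp m1 m2 m3 V psi V' psi' Hm1 Hp Hp0) in ME, ME', Hip''.
  unfold hatc in ME, ME', EB, Hip, Hip', Hip''.
  nfh ME. nfh ME'. nfh EB. nfh Hip. nfh Hip'. nfh Hip''. nfh Hpiio. nfh Hpiio'. nfh Hpiio''.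
  split; [exact Hc|]. exists om'. split; [exact Ho'|]. split.
  - apply (faith EMc HEM m3 Hm3 _ (comp1 (F1 m2 m3 V' psi') (F1 m1 m2 V psi))
           (comp1 (F1 m2 m3 V' psi') (F1 m1 m2 V psi))); [ty|ty|].
    nf. rewrite Eo', Ec. unfold del, gam. nf.
    rw 2 2 Hip''. rw 2 5 (eq_sym ME). pose proof Hpiio as P. wL V' in P. rw 1 2 P.
    pose proof Hip' as P'. wR (F1 m1 m2 V psi) in P'. rw 1 3 (eq_sym P').
    pose proof Hpiio' as P2. wR (F1 m1 m2 V psi) in P2. rw 0 2 P2. reflexivity.
  - apply (faith EMc HEM m3 Hm3 _ (F1 m1 m3 (comp1 V' V) (comp1w_psi V' psi' V psi))
           (F1 m1 m3 (comp1 V' V) (comp1w_psi V' psi' V psi))); [ty|ty|].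
    nf. rewrite Ec, Eo'. unfold del, gam. nf.
    pose proof Hip' as P'. wR (F1 m1 m2 V psi) in P'. rw 2 2 P'.
    rw 2 4 (eq_sym ME'). pose proof Hip as P. wL V' in P. rw 1 2 P.
    wL V' in EB. rw 1 5 EB. rw 1 4 (eq_sym Hip''). rw 0 2 Hpiio''. reflexivity.
Qed.

Lemma HJ2 m m' V psi W phi rho : is_monad m -> is_monad m' -> is_EMw1 m m' V psi -> is_EMw1 m m' W phi ->
  is_EMw2 m m' V psi W phi rho ->
  is2 (F2 m m' V psi W phi rho) (F1 m m' V psi) (F1 m m' W phi) /\
  hcomp (id2 (Jv' EMc m')) (F2 m m' V psi W phi rho) =
  vcomp (spi (spl m m' W phi)) (vcomp (hatc EMc m W rho) (siota (spl m m' V psi))).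
Proof.
  intros Hm Hm' HV HW Hr. destruct (proj2 HJ m m' V W psi phi rho Hm Hm' HV HW Hr) as [H1 H2].
  split; [exact H1|]. rewrite H2. unfold hatc.
  one m m' V psi Hm Hm' HV as WV Ev Ea. one m m' W phi Hm Hm' HW as WW Ew Ew'.
  mon m Hm. mon m' Hm'. destruct Hr as (Hr & _ & _). f_equal. rewrite vA; [reflexivity|tyeq|tyeq].
Qed.

Lemma F2_id m m' W phi : is_monad m -> is_monad m' -> is_EMw1 m m' W phi ->
  F2 m m' W phi W phi (id2w m' W phi) = id2 (F1 m m' W phi).
Proof.
  intros Hm Hm' HW. pose proof (EMw2_id m m' W phi Hm Hm' HW) as Hr.
  destruct (HJ2 m m' W phi W phi _ Hm Hm' HW HW Hr) as [H1 H2].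
  one m m' W phi Hm Hm' HW as WW Ew Ea.
  destruct WW as (_ & _ & _ & _ & Hip & Hpiio). unfold hatc in Hip.
  mon m Hm. mon m' Hm'.
  apply (faith EMc HEM m' Hm' _ (F1 m m' W phi) (F1 m m' W phi)); [ty|ty|].
  rewrite H2. unfold hatc, id2w. nf. nfh Hip. rw 1 3 (eq_sym Hip). nfh Hpiio. rw 0 2 Hpiio. reflexivity.
Qed.

Lemma F2_vcomp m m' V psi W phi U chi rho tau :
  is_monad m -> is_monad m' -> is_EMw1 m m' V psi -> is_EMw1 m m' W phi -> is_EMw1 m m' U chi ->
  is_EMw2 m m' V psi W phi rho -> is_EMw2 m m' W phi U chi tau ->
  F2 m m' V psi U chi (vcomp2w m U tau rho) =
  vcomp (F2 m m' W phi U chi tau) (F2 m m' V psi W phi rho).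
Proof.
  intros Hm Hm' HV HW HU Hr Ht.
  pose proof (EMw2_vcomp m m' V psi W phi U chi rho tau Hm Hm' HV HW HU Hr Ht) as Htr.
  destruct (HJ2 _ _ _ _ _ _ _ Hm Hm' HV HU Htr) as [H1 H2].
  destruct (HJ2 _ _ _ _ _ _ _ Hm Hm' HV HW Hr) as [G1 G2].
  destruct (HJ2 _ _ _ _ _ _ _ Hm Hm' HW HU Ht) as [K1 K2].
  pose proof (J_e EMc HEM m m' V psi W phi rho Hm Hm' HV HW Hr) as JE.
  pose proof (J_vcomp EMc HEM m m' V W U rho tau Hm (proj1 Hr) (proj1 Ht)) as JV.
  one m m' W phi Hm Hm' HW as WW Ew Ea.
  one m m' V psi Hm Hm' HV as WV Ev Eva. one m m' U chi Hm Hm' HU as WU Eu Eua.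
  destruct WW as (_ & _ & _ & _ & Hip & Hpiio).
  pose proof (proj1 Hr) as Hr1. pose proof (proj1 Ht) as Ht1.
  mon m Hm. mon m' Hm'.
  apply (faith EMc HEM m' Hm' _ (F1 m m' V psi) (F1 m m' U chi)); [ty|ty|].
  rewrite H2, JV. nf. rewrite K2, G2.
  unfold hatc in JE, Hip |- *. nfh JE. nfh Hip. nf. rwr 3 2 Hip. rwr 3 5 JE. reflexivity.
Qed.

End JW2.

Section JW3.
Context {K : TwoCat} {HK : strict_2cat K}.
Variable EMc : EMchoice K.
Hypothesis HEM : EMchoice_ok EMc.
Variable spl : split_choice EMc.
Hypothesis Hspl : split_choice_ok EMc spl.
Variables (F1 : J1type EMc) (F2 : J2type EMc).
Hypothesis HJ : is_Jw EMc spl F1 F2.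

Ltac mon m Hm :=
  let H := fresh in pose proof (EMf EMc HEM m Hm) as H;
  let Et := fresh "Et" in let He := fresh "He" in let Emu := fresh "Emu" in
  let T1 := fresh "T1" in let T2 := fresh "T2" in
  destruct H as (Et & He & Emu & T1 & T2); apply toHE in Et; apply toHE in Emu;
  let H' := fresh in pose proof Hm as H';
  let Hmu := fresh "Hmu" in let Heta := fresh "Heta" in let Hass := fresh "Hass" in
  let Hu1 := fresh "Hu" in let Hu2 := fresh "Hu" in
  destruct H' as (Hmu & Heta & Hass & Hu1 & Hu2).

Tactic Notation "one" constr(m) constr(m') constr(V) constr(psi) constr(Hm) constr(Hm') constr(HV)
   "as" ident(W) ident(Ev) ident(Ea) :=
  pose proof (J_WAS EMc HEM spl Hspl m m' V psi Hm Hm' HV) as W;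
  pose proof (proj1 HJ m m' V psi Hm Hm' HV) as Ev; destruct Ev as [Ev Ea];
  apply eq_sym in Ev; apply toHE in Ev;
  let W' := fresh in pose proof W as W';
  let Hpi := fresh "Hpi" in let Hio := fresh "Hio" in
  destruct W' as (_ & _ & Hpi & Hio & _ & _);
  let Hps := fresh "Hps" in pose proof (proj1 HV) as Hps.

Tactic Notation "setup3" constr(m1) constr(m2) constr(m3) constr(V) constr(psi) constr(V') constr(psi')
  constr(Hm1) constr(Hm2) constr(Hm3) constr(HV) constr(HV') "as" ident(HVV) ident(W) ident(W') ident(W'')
  ident(WX) ident(Ev) ident(Ev') ident(Ev'') ident(Ea) ident(Ea') ident(Ea'') :=
  pose proof (EMw1_comp m1 m2 m3 V psi V' psi' Hm1 Hm2 Hm3 HV HV') as HVV;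
  one m1 m2 V psi Hm1 Hm2 HV as W Ev Ea;
  one m2 m3 V' psi' Hm2 Hm3 HV' as W' Ev' Ea';
  one m1 m3 (comp1 V' V) (comp1w_psi V' psi' V psi) Hm1 Hm3 HVV as W'' Ev'' Ea'';
  pose proof (WAS_wh m3 Hm3 _ _ _ _ _ _ _ (F1 m1 m2 V psi) W') as WX;
  let Hp := fresh "Hp" in let Ep := fresh "Ep" in pose proof HV as [Hp Ep];
  let Hp := fresh "Hp" in let Ep := fresh "Ep" in pose proof HV' as [Hp Ep];
  mon m1 Hm1; mon m2 Hm2; mon m3 Hm3.


Notation ccF := (cc EMc spl F1).
Notation uuF := (uu EMc spl F1).
Notation gamF := (gam EMc spl F1).
Notation delF := (del EMc spl F1).


Notation HJ2' := (HJ2 EMc HEM spl Hspl F1 F2 HJ).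
Notation hatc_comp' := (hatc_comp EMc).

Lemma SW (a b c : K) (X Y : hom a b) (om : cell a b) (A At : hom b c) (pi io : cell b c) :
  is2 om X Y -> is2 pi A At -> is2 io At A -> vcomp pi io = id2 At ->
  hcomp (id2 At) om = vcomp (hcomp pi (id2 Y)) (vcomp (hcomp (id2 A) om) (hcomp io (id2 X))).
Proof.
  intros Ho Hp Hi E. symmetry. nf. swi 1. wR Y in E. rw 0 2 E. reflexivity.
Qed.

Lemma cc_nat m1 m2 m3 V psi W phi rho V' psi' W' phi' rho' :
  is_monad m1 -> is_monad m2 -> is_monad m3 ->
  is_EMw1 m1 m2 V psi -> is_EMw1 m1 m2 W phi ->
  is_EMw1 m2 m3 V' psi' -> is_EMw1 m2 m3 W' phi' ->
  is_EMw2 m1 m2 V psi W phi rho -> is_EMw2 m2 m3 V' psi' W' phi' rho' ->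
  vcomp (ccF m1 m2 m3 W' phi' W phi)
    (hcomp (F2 m2 m3 V' psi' W' phi' rho') (F2 m1 m2 V psi W phi rho)) =
  vcomp (F2 m1 m3 (comp1 V' V) (comp1w_psi V' psi' V psi)
                  (comp1 W' W) (comp1w_psi W' phi' W phi)
                  (hcomp2w m1 W' W V psi rho' rho))
    (ccF m1 m2 m3 V' psi' V psi).
Proof.
  intros Hm1 Hm2 Hm3 HV HW HV' HW' Hr Hr'.
  pose proof (EMw1_comp m1 m2 m3 V psi V' psi' Hm1 Hm2 Hm3 HV HV') as HVV.
  pose proof (EMw1_comp m1 m2 m3 W phi W' phi' Hm1 Hm2 Hm3 HW HW') as HWW.
  pose proof (EMw2_hcomp m1 m2 m3 V psi W phi rho V' psi' W' phi' rho' Hm1 Hm2 Hm3 HV HW HV' HW' Hr Hr') as Hs.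
  destruct (cc_spec EMc HEM spl Hspl F1 F2 HJ m1 m2 m3 V psi V' psi' Hm1 Hm2 Hm3 HV HV') as [Hc1 Ec1].
  destruct (cc_spec EMc HEM spl Hspl F1 F2 HJ m1 m2 m3 W phi W' phi' Hm1 Hm2 Hm3 HW HW') as [Hc2 Ec2].
  destruct (HJ2' _ _ _ _ _ _ _ Hm1 Hm2 HV HW Hr) as [G1 G2].
  destruct (HJ2' _ _ _ _ _ _ _ Hm2 Hm3 HV' HW' Hr') as [K1 K2].
  destruct (HJ2' _ _ _ _ _ _ _ Hm1 Hm3 HVV HWW Hs) as [S1 S2].
  pose proof (J_hcomp EMc HEM m1 m2 m3 V psi W V' W' rho rho' Hm1 Hm2 (proj1 HV) (proj1 Hr) (proj1 Hr')) as JH.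
  pose proof (J_mor EMc HEM m1 m2 V psi W phi rho Hm1 Hm2 HV HW Hr) as JMr.
  pose proof (J_mor EMc HEM m2 m3 V' psi' W' phi' rho' Hm2 Hm3 HV' HW' Hr') as JMr'.
  pose proof (J_e EMc HEM m2 m3 V' psi' W' phi' rho' Hm2 Hm3 HV' HW' Hr') as JEr'.
  pose proof (J_mor EMc HEM m1 m3 _ _ _ _ _ Hm1 Hm3 HVV HWW Hs) as JMs.
  pose proof (J_e EMc HEM m1 m3 _ _ _ _ _ Hm1 Hm3 HVV HWW Hs) as JEs.
  pose proof (J_WAS EMc HEM spl Hspl _ _ _ _ Hm1 Hm2 HW) as WAW.
  pose proof (J_WAS EMc HEM spl Hspl _ _ _ _ Hm2 Hm3 HV') as WAV'.
  pose proof (J_WAS EMc HEM spl Hspl _ _ _ _ Hm2 Hm3 HW') as WAW'.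
  pose proof (J_WAS EMc HEM spl Hspl _ _ _ _ Hm1 Hm3 HVV) as WAVV.
  pose proof (J_WAS EMc HEM spl Hspl _ _ _ _ Hm1 Hm3 HWW) as WAWW.
  assert (Hg1 : is2 (hatc EMc m2 W' rho') (comp1 V' (Jv' EMc m2)) (comp1 W' (Jv' EMc m2))).
  { destruct Hr' as (Hr1' & _). mon m2 Hm2. unfold hatc. ty. }
  assert (Hg2 : is2 (hatc EMc m1 (comp1 W' W) (hcomp2w m1 W' W V psi rho' rho))
     (comp1 (comp1 V' V) (Jv' EMc m1)) (comp1 (comp1 W' W) (Jv' EMc m1))).
  { rewrite JH. destruct Hr' as (Hr1' & _). destruct Hr as (Hr1 & _). destruct HV as [Hp _].
    mon m1 Hm1. mon m2 Hm2. unfold hatc. ty. }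
  pose proof (WAS_mor_e m3 Hm3 _ _ _ _ _ _ _ _ _ _ _ _ WAV' WAW' Hg1 JMr') as ME1.
  pose proof (WAS_mor_e m3 Hm3 _ _ _ _ _ _ _ _ _ _ _ _ WAVV WAWW Hg2 JMs) as ME2.
  pose proof (WAS_pi_mor m2 Hm2 _ _ _ _ _ _ WAW) as PM.
  pose proof (WAS_e_be m2 Hm2 _ _ _ _ _ _ WAW) as EB.
  one m1 m2 V psi Hm1 Hm2 HV as WV Ev Ea.
  one m1 m2 W phi Hm1 Hm2 HW as WW Ew Eaw.
  one m2 m3 V' psi' Hm2 Hm3 HV' as WV' Ev' Ea'.
  one m2 m3 W' phi' Hm2 Hm3 HW' as WW' Ew' Eaw'.
  one m1 m3 (comp1 V' V) (comp1w_psi V' psi' V psi) Hm1 Hm3 HVV as WVV Evv Eavv.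
  one m1 m3 (comp1 W' W) (comp1w_psi W' phi' W phi) Hm1 Hm3 HWW as WWW Eww Eaww.
  destruct WW as (_ & _ & _ & _ & HipW & HpiioW).
  destruct WV' as (_ & _ & _ & _ & HipV' & HpiioV').
  destruct WW' as (_ & _ & _ & _ & HipW' & HpiioW').
  destruct WVV as (_ & _ & _ & _ & HipVV & HpiioVV).
  pose proof (SW _ _ _ _ _ (F2 m1 m2 V psi W phi rho) _ _ _ _ G1 Hpi1 Hio1 HpiioV') as SWr.
  destruct Hr as (Hr1 & _). destruct Hr' as (Hr1' & _).
  pose proof (proj1 HW) as Hf. pose proof (proj1 HW') as Hf'.
  rewrite (hatc_comp EMc HEM m1 m2 m3 V psi V' psi' Hm1 Hps Hps1) in ME2, HipVV.
  rewrite (hatc_comp EMc HEM m1 m2 m3 W phi W' phi' Hm1 Hps0 Hps2) in ME2, JEs.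
  rewrite JH in ME2, JEs, S2.
  mon m1 Hm1. mon m2 Hm2. mon m3 Hm3. tnorm.
  unfold hatc in *.
  nfh ME1. nfh ME2. nfh PM. nfh EB. nfh JMr. nfh JEr'. nfh JEs. nfh HipW. nfh HipV'. nfh HipW'. nfh HipVV.
  nfh Eaw. nfh SWr. nfh G2. nfh K2. nfh S2. nfh Ec1. nfh Ec2.
  tnorm.
  apply (faith EMc HEM m3 Hm3 _ (comp1 (F1 m2 m3 V' psi') (F1 m1 m2 V psi))
           (F1 m1 m3 (comp1 W' W) (comp1w_psi W' phi' W phi))); [ty|ty|].
  rewrite (@hc_split1 _ _ _ _ _ (F2 m2 m3 V' psi' W' phi' rho') (F2 m1 m2 V psi W phi rho)).
  pose proof K2 as K2'. wR (F1 m1 m2 W phi) in K2'.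
  pose proof G2 as G2'. wL V' in G2'.
  nf. rewrite Ec2, K2', SWr. nf. rewrite G2'. unfold gam. nf.
  pose proof HipW' as P. wR (F1 m1 m2 W phi) in P. rw 2 2 P.
  pose proof JEr' as P1. wR (F1 m1 m2 W phi) in P1. rw 2 5 P1.
  pose proof HipV' as P2. wR (F1 m1 m2 W phi) in P2. rw 4 2 P2.
  pose proof ME1 as P3. wR (F1 m1 m2 W phi) in P3. rw 2 5 P3.
  rw 2 5 P1. swo 3.
  pose proof Eaw as P4. wL W' in P4. rw 2 2 P4.
  pose proof PM as P5. wL W' in P5. rw 2 5 P5.
  pose proof HipW as P6. wL W' in P6. rw 1 2 P6.
  pose proof EB as P7. wL W' in P7. rw 1 5 P7.
  swo 3. swo 4.
  pose proof JMr as P8. wL W' in P8. rw 1 4 P8.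
  symmetry. rewrite S2, Ec1. unfold gam. nf.
  rw 6 2 HipVV. rw 1 9 ME2. rw 1 9 JEs. reflexivity.
Qed.

End JW3.

Section JW4.
Context {K : TwoCat} {HK : strict_2cat K}.
Variable EMc : EMchoice K.
Hypothesis HEM : EMchoice_ok EMc.
Variable spl : split_choice EMc.
Hypothesis Hspl : split_choice_ok EMc spl.
Variables (F1 : J1type EMc) (F2 : J2type EMc).
Hypothesis HJ : is_Jw EMc spl F1 F2.

Ltac mon m Hm :=
  let H := fresh in pose proof (EMf EMc HEM m Hm) as H;
  let Et := fresh "Et" in let He := fresh "He" in let Emu := fresh "Emu" in
  let T1 := fresh "T1" in let T2 := fresh "T2" in
  destruct H as (Et & He & Emu & T1 & T2); apply toHE in Et; apply toHE in Emu;
  let H' := fresh in pose proof Hm as H';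
  let Hmu := fresh "Hmu" in let Heta := fresh "Heta" in let Hass := fresh "Hass" in
  let Hu1 := fresh "Hu" in let Hu2 := fresh "Hu" in
  destruct H' as (Hmu & Heta & Hass & Hu1 & Hu2).

Tactic Notation "one" constr(m) constr(m') constr(V) constr(psi) constr(Hm) constr(Hm') constr(HV)
   "as" ident(W) ident(Ev) ident(Ea) :=
  pose proof (J_WAS EMc HEM spl Hspl m m' V psi Hm Hm' HV) as W;
  pose proof (proj1 HJ m m' V psi Hm Hm' HV) as Ev; destruct Ev as [Ev Ea];
  apply eq_sym in Ev; apply toHE in Ev;
  let W' := fresh in pose proof W as W';
  let Hpi := fresh "Hpi" in let Hio := fresh "Hio" in
  destruct W' as (_ & _ & Hpi & Hio & _ & _);
  let Hps := fresh "Hps" in pose proof (proj1 HV) as Hps.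

Tactic Notation "setup3" constr(m1) constr(m2) constr(m3) constr(V) constr(psi) constr(V') constr(psi')
  constr(Hm1) constr(Hm2) constr(Hm3) constr(HV) constr(HV') "as" ident(HVV) ident(W) ident(W') ident(W'')
  ident(WX) ident(Ev) ident(Ev') ident(Ev'') ident(Ea) ident(Ea') ident(Ea'') :=
  pose proof (EMw1_comp m1 m2 m3 V psi V' psi' Hm1 Hm2 Hm3 HV HV') as HVV;
  one m1 m2 V psi Hm1 Hm2 HV as W Ev Ea;
  one m2 m3 V' psi' Hm2 Hm3 HV' as W' Ev' Ea';
  one m1 m3 (comp1 V' V) (comp1w_psi V' psi' V psi) Hm1 Hm3 HVV as W'' Ev'' Ea'';
  pose proof (WAS_wh m3 Hm3 _ _ _ _ _ _ _ (F1 m1 m2 V psi) W') as WX;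
  let Hp := fresh "Hp" in let Ep := fresh "Ep" in pose proof HV as [Hp Ep];
  let Hp := fresh "Hp" in let Ep := fresh "Ep" in pose proof HV' as [Hp Ep];
  mon m1 Hm1; mon m2 Hm2; mon m3 Hm3.


Notation ccF := (cc EMc spl F1).
Notation uuF := (uu EMc spl F1).
Notation gamF := (gam EMc spl F1).
Notation delF := (del EMc spl F1).



Notation HJ2' := (HJ2 EMc HEM spl Hspl F1 F2 HJ).

Lemma psiA_eq m1 m2 m3 (m4 : monad K) V psi V' psi' (V'' : hom (mk m3) (mk m4)) psi'' :
  is2 psi (comp1 (mt m2) V) (comp1 V (mt m1)) -> is2 psi' (comp1 (mt m3) V') (comp1 V' (mt m2)) ->
  is2 psi'' (comp1 (mt m4) V'') (comp1 V'' (mt m3)) ->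
  comp1w_psi (comp1 V'' V') (comp1w_psi V'' psi'' V' psi') V psi =
  comp1w_psi V'' psi'' (comp1 V' V) (comp1w_psi V' psi' V psi).
Proof. intros H1 H2 H3. unfold comp1w_psi. nf. reflexivity. Qed.

Lemma psiU1 (m m' : monad K) V psi : is2 psi (comp1 (mt m') V) (comp1 V (mt m)) ->
  comp1w_psi V psi (id1 (mk m)) (id1w_psi m) = psi.
Proof. intros H. unfold comp1w_psi, id1w_psi. nf. reflexivity. Qed.
Lemma psiU2 (m m' : monad K) V psi : is2 psi (comp1 (mt m') V) (comp1 V (mt m)) ->
  comp1w_psi (id1 (mk m')) (id1w_psi m') V psi = psi.
Proof. intros H. unfold comp1w_psi, id1w_psi. nf. reflexivity. Qed.

Lemma SW4 (a b c : K) (X Y : hom a b) (om : cell a b) (A At : hom b c) (pi io : cell b c) :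
  is2 om X Y -> is2 pi A At -> is2 io At A -> vcomp pi io = id2 At ->
  hcomp (id2 At) om = vcomp (hcomp pi (id2 Y)) (vcomp (hcomp (id2 A) om) (hcomp io (id2 X))).
Proof.
  intros Ho Hp Hi E. symmetry. nf. swi 1. wR Y in E. rw 0 2 E. reflexivity.
Qed.

Lemma cc_unit1 m m' V psi : is_monad m -> is_monad m' -> is_EMw1 m m' V psi ->
  vcomp (ccF m m m' V psi (id1 (mk m)) (id1w_psi m))
    (hcomp (id2 (F1 m m' V psi)) (uuF m)) = id2 (F1 m m' V psi).
Proof.
  intros Hm Hm' HV. pose proof (EMw1_id m Hm) as H0.
  destruct (cc_spec EMc HEM spl Hspl F1 F2 HJ m m m' _ _ V psi Hm Hm Hm' H0 HV) as [Hc Ec].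
  destruct (uu_spec EMc HEM spl Hspl F1 F2 HJ m Hm) as [Hu Eu].
  pose proof (gam_g EMc HEM spl Hspl F1 F2 HJ m m m' _ _ V psi Hm Hm Hm' H0 HV) as Gg.
  pose proof (J_WAS EMc HEM spl Hspl _ _ _ _ Hm Hm' HV) as WV.
  pose proof (J_WAS EMc HEM spl Hspl _ _ _ _ Hm Hm H0) as W0.
  pose proof (WAS_wh m' Hm' _ _ _ _ _ _ _ (F1 m m (id1 (mk m)) (id1w_psi m)) WV) as WX.
  pose proof (proj1 HV) as Hp.
  unfold gam in Ec. rewrite (@c1r _ _ _ _ V), (psiU1 m m' V psi Hp) in Hc, Ec, Gg.
  assert (Hg : is2 (hcomp (id2 V) (siota (spl m m (id1 (mk m)) (id1w_psi m))))
     (comp1 (comp1 V (Jv' EMc m)) (F1 m m (id1 (mk m)) (id1w_psi m))) (comp1 V (Jv' EMc m))).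
  { one m m (id1 (mk m)) (id1w_psi m) Hm Hm H0 as W0' Ev0 Ea0. mon m Hm. mon m' Hm'. ty. }
  pose proof (WAS_mor_e m' Hm' _ _ _ _ _ _ _ _ _ _ _ _ WX WV Hg Gg) as ME.
  one m m' V psi Hm Hm' HV as WV' Ev Ea.
  one m m (id1 (mk m)) (id1w_psi m) Hm Hm H0 as W0' Ev0 Ea0.
  destruct WV as (_ & _ & _ & _ & Hip & Hpiio).
  destruct W0 as (_ & _ & _ & _ & Hip0 & Hpiio0).
  pose proof (SW4 _ _ _ _ _ (uuF m) _ _ _ _ Hu Hpi Hio Hpiio) as SWu.
  rewrite (hatc_id EMc HEM m Hm) in Hip0.
  mon m Hm. mon m' Hm'. tnorm. unfold hatc in *.
  nfh ME. nfh Hip. nfh Hip0. nfh Hpiio. nfh SWu. nfh Ec. nfh Eu. nfh T1.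
  apply (faith EMc HEM m' Hm' _ (F1 m m' V psi) (F1 m m' V psi)); [ty|ty|].
  nf. rewrite Ec, SWu. nf. wL V in Eu. rewrite Eu. nf.
  pose proof Hip as P. wR (F1 m m (id1 (mk m)) (id1w_psi m)) in P. rw 2 2 P.
  rw 1 4 ME. rw 0 4 (eq_sym Hip). rw 0 2 Hpiio. wL V in Hip0. rw 1 2 Hip0. wL V in T1. rw 1 2 T1.
  rw 0 2 Hpiio. reflexivity.
Qed.

Lemma cc_unit2 m m' V psi : is_monad m -> is_monad m' -> is_EMw1 m m' V psi ->
  vcomp (ccF m m' m' (id1 (mk m')) (id1w_psi m') V psi)
    (hcomp (uuF m') (id2 (F1 m m' V psi))) = id2 (F1 m m' V psi).
Proof.
  intros Hm Hm' HV. pose proof (EMw1_id m' Hm') as H0.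
  destruct (cc_spec EMc HEM spl Hspl F1 F2 HJ m m' m' V psi _ _ Hm Hm' Hm' HV H0) as [Hc Ec].
  destruct (uu_spec EMc HEM spl Hspl F1 F2 HJ m' Hm') as [Hu Eu].
  pose proof (J_WAS EMc HEM spl Hspl _ _ _ _ Hm Hm' HV) as WV.
  pose proof (J_WAS EMc HEM spl Hspl _ _ _ _ Hm' Hm' H0) as W0.
  pose proof (proj1 HV) as Hp.
  unfold gam in Ec. rewrite (@c1l _ _ _ _ V), (psiU2 m m' V psi Hp) in Hc, Ec.
  one m m' V psi Hm Hm' HV as WV' Ev Ea.
  one m' m' (id1 (mk m')) (id1w_psi m') Hm' Hm' H0 as W0' Ev0 Ea0.
  destruct WV as (_ & _ & _ & _ & Hip & Hpiio).
  destruct W0 as (_ & _ & _ & _ & Hip0 & Hpiio0).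
  rewrite (hatc_id EMc HEM m' Hm') in Hip0.
  mon m Hm. mon m' Hm'. tnorm. unfold hatc in *.
  nfh Hip. nfh Hip0. nfh Hpiio. nfh Ec. nfh Eu. nfh T0.
  apply (faith EMc HEM m' Hm' _ (F1 m m' V psi) (F1 m m' V psi)); [ty|ty|].
  wR (F1 m m' V psi) in Eu. nf. rewrite Ec, Eu. nf.
  wR (F1 m m' V psi) in Hip0. rw 2 2 Hip0. wR (F1 m m' V psi) in T0. rw 2 2 T0.
  rw 0 2 Hpiio. reflexivity.
Qed.

Lemma cc_assoc m1 m2 m3 m4 V psi V' psi' V'' psi'' :
  is_monad m1 -> is_monad m2 -> is_monad m3 -> is_monad m4 ->
  is_EMw1 m1 m2 V psi -> is_EMw1 m2 m3 V' psi' -> is_EMw1 m3 m4 V'' psi'' ->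
  vcomp (ccF m1 m3 m4 V'' psi'' (comp1 V' V) (comp1w_psi V' psi' V psi))
    (hcomp (id2 (F1 m3 m4 V'' psi'')) (ccF m1 m2 m3 V' psi' V psi)) =
  vcomp (ccF m1 m2 m4 (comp1 V'' V') (comp1w_psi V'' psi'' V' psi') V psi)
    (hcomp (ccF m2 m3 m4 V'' psi'' V' psi') (id2 (F1 m1 m2 V psi))).
Proof.
  intros Hm1 Hm2 Hm3 Hm4 HV HV' HV''.
  pose proof (EMw1_comp m1 m2 m3 V psi V' psi' Hm1 Hm2 Hm3 HV HV') as HVV.
  pose proof (EMw1_comp m2 m3 m4 V' psi' V'' psi'' Hm2 Hm3 Hm4 HV' HV'') as HV2.
  pose proof (EMw1_comp m1 m3 m4 _ _ V'' psi'' Hm1 Hm3 Hm4 HVV HV'') as HA.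
  pose proof (proj1 HV) as Hp. pose proof (proj1 HV') as Hp'. pose proof (proj1 HV'') as Hp''.
  pose proof (proj1 HVV) as HpVV. pose proof (proj1 HV2) as HpV2.
  destruct (cc_spec EMc HEM spl Hspl F1 F2 HJ m1 m2 m3 V psi V' psi' Hm1 Hm2 Hm3 HV HV') as [Hc1 Ec1].
  destruct (cc_spec EMc HEM spl Hspl F1 F2 HJ m2 m3 m4 V' psi' V'' psi'' Hm2 Hm3 Hm4 HV' HV'') as [Hc2 Ec2].
  destruct (cc_spec EMc HEM spl Hspl F1 F2 HJ m1 m3 m4 _ _ V'' psi'' Hm1 Hm3 Hm4 HVV HV'') as [HcA EcA].
  destruct (cc_spec EMc HEM spl Hspl F1 F2 HJ m1 m2 m4 V psi _ _ Hm1 Hm2 Hm4 HV HV2) as [HcB EcB].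
  unfold gam in Ec1, Ec2, EcA, EcB.
  rewrite <- (@c1A _ _ _ _ _ _ V'' V' V), (psiA_eq m1 m2 m3 m4 V psi V' psi' V'' psi'' Hp Hp' Hp'') in HcB, EcB.
  pose proof (gam_g EMc HEM spl Hspl F1 F2 HJ m1 m3 m4 _ _ V'' psi'' Hm1 Hm3 Hm4 HVV HV'') as Gg1.
  pose proof (gam_g EMc HEM spl Hspl F1 F2 HJ m1 m2 m3 V psi V' psi' Hm1 Hm2 Hm3 HV HV') as Gg2.
  pose proof (gam_g EMc HEM spl Hspl F1 F2 HJ m2 m3 m4 V' psi' V'' psi'' Hm2 Hm3 Hm4 HV' HV'') as Gg3.
  pose proof (J_WAS EMc HEM spl Hspl _ _ _ _ Hm1 Hm2 HV) as W.
  pose proof (J_WAS EMc HEM spl Hspl _ _ _ _ Hm2 Hm3 HV') as W'.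
  pose proof (J_WAS EMc HEM spl Hspl _ _ _ _ Hm3 Hm4 HV'') as W''.
  pose proof (J_WAS EMc HEM spl Hspl _ _ _ _ Hm1 Hm3 HVV) as WVV.
  pose proof (J_WAS EMc HEM spl Hspl _ _ _ _ Hm2 Hm4 HV2) as WV2.
  pose proof (J_WAS EMc HEM spl Hspl _ _ _ _ Hm1 Hm4 HA) as WA.
  pose proof (WAS_wh m4 Hm4 _ _ _ _ _ _ _ (F1 m1 m3 (comp1 V' V) (comp1w_psi V' psi' V psi)) W'') as WX1.
  pose proof (WAS_wh m3 Hm3 _ _ _ _ _ _ _ (F1 m1 m2 V psi) W') as WX2.
  pose proof (WAS_wh m4 Hm4 _ _ _ _ _ _ _ (F1 m2 m3 V' psi') W'') as WX3.
  one m1 m2 V psi Hm1 Hm2 HV as W0 Ev Ea.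
  one m2 m3 V' psi' Hm2 Hm3 HV' as W0' Ev' Ea'.
  one m3 m4 V'' psi'' Hm3 Hm4 HV'' as W0'' Ev'' Ea''.
  one m1 m3 (comp1 V' V) (comp1w_psi V' psi' V psi) Hm1 Hm3 HVV as W0VV EvVV EaVV.
  one m2 m4 (comp1 V'' V') (comp1w_psi V'' psi'' V' psi') Hm2 Hm4 HV2 as W0V2 EvV2 EaV2.
  one m1 m4 (comp1 V'' (comp1 V' V)) (comp1w_psi V'' psi'' (comp1 V' V) (comp1w_psi V' psi' V psi))
    Hm1 Hm4 HA as W0A EvA EaA.
  assert (Hg1 : is2 (hcomp (id2 V'') (siota (spl m1 m3 (comp1 V' V) (comp1w_psi V' psi' V psi))))
     (comp1 (comp1 V'' (Jv' EMc m3)) (F1 m1 m3 (comp1 V' V) (comp1w_psi V' psi' V psi)))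
     (comp1 (comp1 V'' (comp1 V' V)) (Jv' EMc m1))).
  { mon m1 Hm1. mon m3 Hm3. ty. }
  assert (Hg2 : is2 (hcomp (id2 V') (siota (spl m1 m2 V psi)))
     (comp1 (comp1 V' (Jv' EMc m2)) (F1 m1 m2 V psi)) (comp1 (comp1 V' V) (Jv' EMc m1))).
  { mon m1 Hm1. mon m2 Hm2. ty. }
  assert (Hg3 : is2 (hcomp (id2 V'') (siota (spl m2 m3 V' psi')))
     (comp1 (comp1 V'' (Jv' EMc m3)) (F1 m2 m3 V' psi')) (comp1 (comp1 V'' V') (Jv' EMc m2))).
  { mon m2 Hm2. mon m3 Hm3. ty. }
  pose proof (WAS_mor_e m4 Hm4 _ _ _ _ _ _ _ _ _ _ _ _ WX1 WA Hg1 Gg1) as ME1.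
  pose proof (WAS_mor_e m3 Hm3 _ _ _ _ _ _ _ _ _ _ _ _ WX2 WVV Hg2 Gg2) as ME2.
  pose proof (WAS_mor_e m4 Hm4 _ _ _ _ _ _ _ _ _ _ _ _ WX3 WV2 Hg3 Gg3) as ME3.
  destruct W' as (_ & _ & _ & _ & Hip' & Hpiio').
  destruct W'' as (_ & _ & _ & _ & Hip'' & Hpiio'').
  destruct WVV as (_ & _ & _ & _ & HipVV & HpiioVV).
  destruct WV2 as (_ & _ & _ & _ & HipV2 & HpiioV2).
  destruct WA as (_ & _ & _ & _ & HipA & HpiioA).
  pose proof (SW4 _ _ _ _ _ (ccF m1 m2 m3 V' psi' V psi) _ _ _ _ Hc1 Hpi1 Hio1 Hpiio'') as SWc.
  rewrite (hatc_comp EMc HEM m1 m3 m4 _ _ V'' psi'' Hm1 HpVV Hp'') in ME1, HipA.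
  rewrite (hatc_comp EMc HEM m1 m2 m3 V psi V' psi' Hm1 Hp Hp') in ME1, ME2, HipA, HipVV.
  rewrite (hatc_comp EMc HEM m2 m3 m4 V' psi' V'' psi'' Hm2 Hp' Hp'') in ME3, HipV2.
  mon m1 Hm1. mon m2 Hm2. mon m3 Hm3. mon m4 Hm4. tnorm.
  unfold hatc in *.
  nfh ME1. nfh ME2. nfh ME3. nfh Hip'. nfh Hip''. nfh HipVV. nfh HipV2. nfh HipA.
  nfh Hpiio'. nfh Hpiio''. nfh HpiioA. nfh SWc. nfh Ec1. nfh Ec2. nfh EcA. nfh EcB.
  apply (faith EMc HEM m4 Hm4 _ (comp1 (F1 m3 m4 V'' psi'') (comp1 (F1 m2 m3 V' psi') (F1 m1 m2 V psi)))
     (F1 m1 m4 (comp1 V'' (comp1 V' V)) (comp1w_psi V'' psi'' (comp1 V' V) (comp1w_psi V' psi' V psi))));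
    [ty|ty|].
  pose proof Ec1 as Ec1'. wL V'' in Ec1'. pose proof Ec2 as Ec2'. wR (F1 m1 m2 V psi) in Ec2'.
  nf. rewrite EcA, SWc. nf. rewrite Ec1'. nf.
  pose proof Hip'' as P1. wR (F1 m1 m3 (comp1 V' V) (comp1w_psi V' psi' V psi)) in P1. rw 2 2 P1.
  rw 1 4 ME1. rw 1 5 (eq_sym HipA). rw 0 2 HpiioA.
  pose proof HipVV as P2. wL V'' in P2. rw 1 2 P2.
  pose proof ME2 as P3. wL V'' in P3. rw 1 5 (eq_sym P3).
  pose proof Hip' as P4. wR (F1 m1 m2 V psi) in P4. wL V'' in P4. rw 2 3 (eq_sym P4).
  pose proof Hpiio' as P5. wR (F1 m1 m2 V psi) in P5. wL V'' in P5. rw 3 2 P5.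
  symmetry. rewrite EcB, Ec2'. nf.
  pose proof HipV2 as P6. wR (F1 m1 m2 V psi) in P6. rw 2 2 P6.
  pose proof ME3 as P7. wR (F1 m1 m2 V psi) in P7. rw 2 5 (eq_sym P7).
  pose proof Hip'' as P8. wR (comp1 (F1 m2 m3 V' psi') (F1 m1 m2 V psi)) in P8. rw 3 3 (eq_sym P8).
  pose proof Hpiio'' as P9. wR (comp1 (F1 m2 m3 V' psi') (F1 m1 m2 V psi)) in P9. rw 4 2 P9.
  reflexivity.
Qed.

End JW4.

Section P2.
Context {K : TwoCat} {HK : strict_2cat K}.
Variable EMc : EMchoice K.
Hypothesis HEM : EMchoice_ok EMc.
Variables spl spl' : split_choice EMc.
Hypothesis Hspl : split_choice_ok EMc spl.
Hypothesis Hspl' : split_choice_ok EMc spl'.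
Variables (F1 : J1type EMc) (F2 : J2type EMc) (G1 : J1type EMc) (G2 : J2type EMc).
Hypothesis HJ : is_Jw EMc spl F1 F2.
Hypothesis HJG : is_Jw EMc spl' G1 G2.

Ltac mon m Hm :=
  let H := fresh in pose proof (EMf EMc HEM m Hm) as H;
  let Et := fresh "Et" in let He := fresh "He" in let Emu := fresh "Emu" in
  let T1 := fresh "T1" in let T2 := fresh "T2" in
  destruct H as (Et & He & Emu & T1 & T2); apply toHE in Et; apply toHE in Emu;
  let H' := fresh in pose proof Hm as H';
  let Hmu := fresh "Hmu" in let Heta := fresh "Heta" in let Hass := fresh "Hass" in
  let Hu1 := fresh "Hu" in let Hu2 := fresh "Hu" in
  destruct H' as (Hmu & Heta & Hass & Hu1 & Hu2).


Tactic Notation "oneS" constr(sp) constr(Hsp) constr(HJx) constr(m) constr(m') constr(V) constr(psi)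
   constr(Hm) constr(Hm') constr(HV) "as" ident(W) ident(Ev) ident(Ea) :=
  pose proof (J_WAS EMc HEM sp Hsp m m' V psi Hm Hm' HV) as W;
  pose proof (proj1 HJx m m' V psi Hm Hm' HV) as Ev; destruct Ev as [Ev Ea];
  apply eq_sym in Ev; apply toHE in Ev;
  let W' := fresh in pose proof W as W';
  let Hpi := fresh "Hpi" in let Hio := fresh "Hio" in
  destruct W' as (_ & _ & Hpi & Hio & _ & _);
  let Hps := fresh "Hps" in pose proof (proj1 HV) as Hps.

Lemma s1_ex m m' V psi : is_monad m -> is_monad m' -> is_EMw1 m m' V psi ->
  exists om, is2 om (G1 m m' V psi) (F1 m m' V psi) /\
    hcomp (id2 (Jv' EMc m')) om = vcomp (spi (spl m m' V psi)) (siota (spl' m m' V psi)).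
Proof.
  intros Hm Hm' HV.
  oneS spl Hspl HJ m m' V psi Hm Hm' HV as WF EvF EaF.
  oneS spl' Hspl' HJG m m' V psi Hm Hm' HV as WG EvG EaG.
  mon m Hm. mon m' Hm'.
  assert (Hg : is2 (id2 (comp1 V (Jv' EMc m))) (comp1 V (Jv' EMc m)) (comp1 V (Jv' EMc m))) by ty.
  assert (Hgm : vcomp (hatc EMc m V psi) (hcomp (id2 (mt m')) (id2 (comp1 V (Jv' EMc m)))) =
                vcomp (id2 (comp1 V (Jv' EMc m))) (hatc EMc m V psi)).
  { unfold hatc. nf. reflexivity. }
  pose proof (WAS_mor m' Hm' _ _ _ _ _ _ _ _ _ _ _ _ WG WF Hg Hgm) as M.
  pose proof (lift2' EMc HEM m' Hm' _ (G1 m m' V psi) (F1 m m' V psi) _ _ _ _ _ M) as Ex.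
  tnorm. destruct Ex as (om & Ho & Eo).
  - homeq.
  - homeq.
  - nfh EaG. unfold hatc. nf. rewrite EaG. reflexivity.
  - nfh EaF. unfold hatc. nf. rewrite EaF. reflexivity.
  - exists om. split; [exact Ho|]. rewrite Eo. nf. reflexivity.
Qed.

End P2.

Section P2b.
Context {K : TwoCat} {HK : strict_2cat K}.
Variable EMc : EMchoice K.
Hypothesis HEM : EMchoice_ok EMc.
Variables spl spl' : split_choice EMc.
Hypothesis Hspl : split_choice_ok EMc spl.
Hypothesis Hspl' : split_choice_ok EMc spl'.
Variables (F1 : J1type EMc) (F2 : J2type EMc) (G1 : J1type EMc) (G2 : J2type EMc).
Hypothesis HJ : is_Jw EMc spl F1 F2.
Hypothesis HJG : is_Jw EMc spl' G1 G2.

Ltac mon m Hm :=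
  let H := fresh in pose proof (EMf EMc HEM m Hm) as H;
  let Et := fresh "Et" in let He := fresh "He" in let Emu := fresh "Emu" in
  let T1 := fresh "T1" in let T2 := fresh "T2" in
  destruct H as (Et & He & Emu & T1 & T2); apply toHE in Et; apply toHE in Emu;
  let H' := fresh in pose proof Hm as H';
  let Hmu := fresh "Hmu" in let Heta := fresh "Heta" in let Hass := fresh "Hass" in
  let Hu1 := fresh "Hu" in let Hu2 := fresh "Hu" in
  destruct H' as (Hmu & Heta & Hass & Hu1 & Hu2).


Tactic Notation "oneS" constr(sp) constr(Hsp) constr(HJx) constr(m) constr(m') constr(V) constr(psi)
   constr(Hm) constr(Hm') constr(HV) "as" ident(W) ident(Ev) ident(Ea) :=
  pose proof (J_WAS EMc HEM sp Hsp m m' V psi Hm Hm' HV) as W;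
  pose proof (proj1 HJx m m' V psi Hm Hm' HV) as Ev; destruct Ev as [Ev Ea];
  apply eq_sym in Ev; apply toHE in Ev;
  let W' := fresh in pose proof W as W';
  let Hpi := fresh "Hpi" in let Hio := fresh "Hio" in
  destruct W' as (_ & _ & Hpi & Hio & _ & _);
  let Hps := fresh "Hps" in pose proof (proj1 HV) as Hps.


Definition s1P m m' V psi om : Prop :=
  is_monad m -> is_monad m' -> is_EMw1 m m' V psi ->
  is2 om (G1 m m' V psi) (F1 m m' V psi) /\
  hcomp (id2 (Jv' EMc m')) om = vcomp (spi (spl m m' V psi)) (siota (spl' m m' V psi)).
Definition s1 : forall m m' : monad K, hom (mk m) (mk m') -> cell (mk m) (mk m') ->
    cell (JO EMc m) (JO EMc m') :=
  fun m m' V psi => epsilon (inhabits (id2 (F1 m m' V psi))) (s1P m m' V psi).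
Lemma s1_spec m m' V psi : is_monad m -> is_monad m' -> is_EMw1 m m' V psi ->
  is2 (s1 m m' V psi) (G1 m m' V psi) (F1 m m' V psi) /\
  hcomp (id2 (Jv' EMc m')) (s1 m m' V psi) = vcomp (spi (spl m m' V psi)) (siota (spl' m m' V psi)).
Proof.
  intros Hm Hm' HV. apply (epsilon_spec _ (s1P m m' V psi)); auto.
  destruct (s1_ex EMc HEM spl spl' Hspl Hspl' F1 F2 G1 G2 HJ HJG m m' V psi Hm Hm' HV) as (om & H1 & H2). exists om. intros _ _ _. auto.
Qed.

Lemma s1_nat m m' V psi W phi rho : is_monad m -> is_monad m' -> is_EMw1 m m' V psi ->
  is_EMw1 m m' W phi -> is_EMw2 m m' V psi W phi rho ->
  vcomp (s1 m m' W phi) (G2 m m' V psi W phi rho) = vcomp (F2 m m' V psi W phi rho) (s1 m m' V psi).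
Proof.
  intros Hm Hm' HV HW Hr.
  destruct (s1_spec m m' V psi Hm Hm' HV) as [HsV EsV].
  destruct (s1_spec m m' W phi Hm Hm' HW) as [HsW EsW].
  destruct (HJ2 EMc HEM spl Hspl F1 F2 HJ _ _ _ _ _ _ _ Hm Hm' HV HW Hr) as [HF EF].
  destruct (HJ2 EMc HEM spl' Hspl' G1 G2 HJG _ _ _ _ _ _ _ Hm Hm' HV HW Hr) as [HG EG].
  pose proof (J_e EMc HEM m m' V psi W phi rho Hm Hm' HV HW Hr) as JE.
  pose proof (J_mor EMc HEM m m' V psi W phi rho Hm Hm' HV HW Hr) as JM.
  oneS spl Hspl HJ m m' V psi Hm Hm' HV as WFV EvFV EaFV.
  oneS spl Hspl HJ m m' W phi Hm Hm' HW as WFW EvFW EaFW.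
  oneS spl' Hspl' HJG m m' V psi Hm Hm' HV as WGV EvGV EaGV.
  oneS spl' Hspl' HJG m m' W phi Hm Hm' HW as WGW EvGW EaGW.
  assert (Hg : is2 (hatc EMc m W rho) (comp1 V (Jv' EMc m)) (comp1 W (Jv' EMc m))).
  { destruct Hr as (Hr1 & _). mon m Hm. unfold hatc. ty. }
  pose proof (WAS_mor_e m' Hm' _ _ _ _ _ _ _ _ _ _ _ _ WFV WFW Hg JM) as ME.
  destruct WFV as (_ & _ & _ & _ & HipFV & _).
  destruct WGW as (_ & _ & _ & _ & HipGW & _).
  destruct Hr as (Hr1 & _).
  mon m Hm. mon m' Hm'. tnorm. unfold hatc in *.
  nfh JE. nfh ME. nfh HipFV. nfh HipGW. nfh EF. nfh EG.
  apply (faith EMc HEM m' Hm' _ (G1 m m' V psi) (F1 m m' W phi)); [ty|ty|].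
  nf. rewrite EsW, EG, EF, EsV. nf.
  rw 1 2 HipGW. rw 1 5 JE. symmetry. rw 3 2 HipFV. rw 1 5 ME. rw 1 5 JE. reflexivity.
Qed.

End P2b.

Section ISO.
Context {K : TwoCat} {HK : strict_2cat K}.
Lemma iso_comp (a b : K) (x y : cell a b) f g h :
  is_iso2 x f g -> is_iso2 y g h -> is_iso2 (vcomp y x) f h.
Proof.
  intros [Hx (x' & Hx' & E1 & E2)] [Hy (y' & Hy' & E3 & E4)].
  split; [ty|]. exists (vcomp x' y'). split; [ty|]. split.
  - nf. rw 1 2 E3. rw 0 2 E1. reflexivity.
  - nf. rw 1 2 E2. rw 0 2 E4. reflexivity.
Qed.
Lemma ich (a b c : K) (x x' : cell b c) (y y' : cell a b) :
  tgt2 x' = src2 x -> tgt2 y' = src2 y ->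
  vcomp (hcomp x y) (hcomp x' y') = hcomp (vcomp x x') (vcomp y y').
Proof. intros E1 E2. symmetry. apply (interchange _ HK); auto. Qed.
Lemma iso_hcomp (a b c : K) (x : cell b c) (y : cell a b) f g f' g' :
  is_iso2 x f g -> is_iso2 y f' g' -> is_iso2 (hcomp x y) (comp1 f f') (comp1 g g').
Proof.
  intros [Hx (x' & Hx' & E1 & E2)] [Hy (y' & Hy' & E3 & E4)].
  split; [ty|]. exists (hcomp x' y'). split; [ty|]. split.
  - rewrite ich by tyeq. rewrite E1, E3. apply hid2.
  - rewrite ich by tyeq. rewrite E2, E4. apply hid2.
Qed.
End ISO.

Section TR.
Context {K : TwoCat} {HK : strict_2cat K}.
Variable EMc : EMchoice K.
Variables (F1 : J1type EMc) (F2 : J2type EMc) (uF : Utype EMc) (cF : Ctype EMc).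
Variables (G1 : J1type EMc) (G2 : J2type EMc).
Variables (S Si : forall m m' : monad K, hom (mk m) (mk m') -> cell (mk m) (mk m') ->
            cell (JO EMc m) (JO EMc m')).
Hypothesis HPF : is_pseudofunctor EMc F1 F2 uF cF.
Hypothesis HG1 : forall (m m' : monad K) (V W : hom (mk m) (mk m')) (psi phi rho : cell (mk m) (mk m')),
      is_monad m -> is_monad m' -> is_EMw1 m m' V psi -> is_EMw1 m m' W phi ->
      is_EMw2 m m' V psi W phi rho ->
      is2 (G2 m m' V psi W phi rho) (G1 m m' V psi) (G1 m m' W phi).
Hypothesis HS : forall m m' V psi, is_monad m -> is_monad m' -> is_EMw1 m m' V psi ->
  is2 (S m m' V psi) (G1 m m' V psi) (F1 m m' V psi) /\
  is2 (Si m m' V psi) (F1 m m' V psi) (G1 m m' V psi) /\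
  vcomp (Si m m' V psi) (S m m' V psi) = id2 (G1 m m' V psi) /\
  vcomp (S m m' V psi) (Si m m' V psi) = id2 (F1 m m' V psi).
Hypothesis HSn : forall m m' V psi W phi rho, is_monad m -> is_monad m' -> is_EMw1 m m' V psi ->
  is_EMw1 m m' W phi -> is_EMw2 m m' V psi W phi rho ->
  vcomp (S m m' W phi) (G2 m m' V psi W phi rho) = vcomp (F2 m m' V psi W phi rho) (S m m' V psi).

Definition uG : Utype EMc := fun m => vcomp (Si m m (id1 (mk m)) (id1w_psi m)) (uF m).
Definition cG : Ctype EMc := fun m1 m2 m3 V' psi' V psi =>
  vcomp (Si m1 m3 (comp1 V' V) (comp1w_psi V' psi' V psi))
    (vcomp (cF m1 m2 m3 V' psi' V psi) (hcomp (S m2 m3 V' psi') (S m1 m2 V psi))).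

Lemma Si_nat m m' V psi W phi rho : is_monad m -> is_monad m' -> is_EMw1 m m' V psi ->
  is_EMw1 m m' W phi -> is_EMw2 m m' V psi W phi rho ->
  vcomp (Si m m' W phi) (F2 m m' V psi W phi rho) = vcomp (G2 m m' V psi W phi rho) (Si m m' V psi).
Proof.
  intros Hm Hm' HV HW Hr.
  destruct (HS m m' V psi Hm Hm' HV) as (S1 & S2 & S3 & S4).
  destruct (HS m m' W phi Hm Hm' HW) as (T1 & T2 & T3 & T4).
  pose proof (HSn m m' V psi W phi rho Hm Hm' HV HW Hr) as N.
  pose proof (HG1 m m' V W psi phi rho Hm Hm' HV HW Hr) as HG.
  destruct HPF as (HF1 & _).
  pose proof (HF1 m m' V W psi phi rho Hm Hm' HV HW Hr) as HF.
  transitivity (vcomp (Si m m' W phi) (vcomp (F2 m m' V psi W phi rho)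
                  (vcomp (S m m' V psi) (Si m m' V psi)))).
  { rewrite S4. nf. reflexivity. }
  nf. rw 1 2 (eq_sym N). rw 0 2 T3. reflexivity.
Qed.

Lemma S_iso m m' V psi : is_monad m -> is_monad m' -> is_EMw1 m m' V psi ->
  is_iso2 (S m m' V psi) (G1 m m' V psi) (F1 m m' V psi) /\
  is_iso2 (Si m m' V psi) (F1 m m' V psi) (G1 m m' V psi).
Proof.
  intros Hm Hm' HV. destruct (HS m m' V psi Hm Hm' HV) as (S1 & S2 & S3 & S4).
  split; split; auto; [exists (Si m m' V psi)|exists (S m m' V psi)]; auto.
Qed.

Lemma uG_iso m : is_monad m -> is_iso2 (uG m) (id1 (JO EMc m)) (G1 m m (id1 (mk m)) (id1w_psi m)).
Proof.
  intros Hm. pose proof (EMw1_id m Hm) as H0. destruct HPF as (_ & _ & _ & HU & _).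
  apply (iso_comp _ _ _ _ _ _ _ (HU m Hm)). apply (S_iso m m _ _ Hm Hm H0).
Qed.

Lemma cG_iso m1 m2 m3 V psi V' psi' :
  is_monad m1 -> is_monad m2 -> is_monad m3 -> is_EMw1 m1 m2 V psi -> is_EMw1 m2 m3 V' psi' ->
  is_iso2 (cG m1 m2 m3 V' psi' V psi) (comp1 (G1 m2 m3 V' psi') (G1 m1 m2 V psi))
          (G1 m1 m3 (comp1 V' V) (comp1w_psi V' psi' V psi)).
Proof.
  intros Hm1 Hm2 Hm3 HV HV'.
  pose proof (EMw1_comp m1 m2 m3 V psi V' psi' Hm1 Hm2 Hm3 HV HV') as HVV.
  destruct HPF as (_ & _ & _ & _ & HC & _).
  unfold cG. eapply iso_comp; [eapply iso_comp|].
  - apply iso_hcomp; apply S_iso; auto.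
  - apply HC; auto.
  - apply S_iso; auto.
Qed.

Lemma cG_nat m1 m2 m3 V psi W phi rho V' psi' W' phi' rho' :
  is_monad m1 -> is_monad m2 -> is_monad m3 ->
  is_EMw1 m1 m2 V psi -> is_EMw1 m1 m2 W phi ->
  is_EMw1 m2 m3 V' psi' -> is_EMw1 m2 m3 W' phi' ->
  is_EMw2 m1 m2 V psi W phi rho -> is_EMw2 m2 m3 V' psi' W' phi' rho' ->
  vcomp (cG m1 m2 m3 W' phi' W phi)
    (hcomp (G2 m2 m3 V' psi' W' phi' rho') (G2 m1 m2 V psi W phi rho)) =
  vcomp (G2 m1 m3 (comp1 V' V) (comp1w_psi V' psi' V psi)
                  (comp1 W' W) (comp1w_psi W' phi' W phi)
                  (hcomp2w m1 W' W V psi rho' rho))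
    (cG m1 m2 m3 V' psi' V psi).
Proof.
  intros Hm1 Hm2 Hm3 HV HW HV' HW' Hr Hr'.
  pose proof (EMw1_comp m1 m2 m3 V psi V' psi' Hm1 Hm2 Hm3 HV HV') as HVV.
  pose proof (EMw1_comp m1 m2 m3 W phi W' phi' Hm1 Hm2 Hm3 HW HW') as HWW.
  pose proof (EMw2_hcomp m1 m2 m3 V psi W phi rho V' psi' W' phi' rho' Hm1 Hm2 Hm3 HV HW HV' HW' Hr Hr') as Hs.
  destruct (HS _ _ _ _ Hm1 Hm2 HV) as (SV1 & SV2 & _ & _).
  destruct (HS _ _ _ _ Hm1 Hm2 HW) as (SW1 & SW2 & _ & _).
  destruct (HS _ _ _ _ Hm2 Hm3 HV') as (SV1' & SV2' & _ & _).
  destruct (HS _ _ _ _ Hm2 Hm3 HW') as (SW1' & SW2' & _ & _).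
  destruct (HS _ _ _ _ Hm1 Hm3 HVV) as (SVV1 & SVV2 & _ & _).
  destruct (HS _ _ _ _ Hm1 Hm3 HWW) as (SWW1 & SWW2 & _ & _).
  pose proof HPF as (HF1 & _ & _ & _ & HC & HN & _).
  pose proof (HF1 _ _ _ _ _ _ _ Hm1 Hm2 HV HW Hr) as F2r.
  pose proof (HF1 _ _ _ _ _ _ _ Hm2 Hm3 HV' HW' Hr') as F2r'.
  pose proof (HF1 _ _ _ _ _ _ _ Hm1 Hm3 HVV HWW Hs) as F2s.
  pose proof (HG1 _ _ _ _ _ _ _ Hm1 Hm2 HV HW Hr) as G2r.
  pose proof (HG1 _ _ _ _ _ _ _ Hm2 Hm3 HV' HW' Hr') as G2r'.
  pose proof (HG1 _ _ _ _ _ _ _ Hm1 Hm3 HVV HWW Hs) as G2s.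
  pose proof (proj1 (HC _ _ _ _ _ _ _ Hm1 Hm2 Hm3 HV HV')) as CV.
  pose proof (proj1 (HC _ _ _ _ _ _ _ Hm1 Hm2 Hm3 HW HW')) as CW.
  pose proof (HN _ _ _ _ _ _ _ _ _ _ _ _ _ Hm1 Hm2 Hm3 HV HW HV' HW' Hr Hr') as N.
  pose proof (HSn _ _ _ _ _ _ _ Hm1 Hm2 HV HW Hr) as Nr.
  pose proof (HSn _ _ _ _ _ _ _ Hm2 Hm3 HV' HW' Hr') as Nr'.
  pose proof (Si_nat _ _ _ _ _ _ _ Hm1 Hm3 HVV HWW Hs) as Ns.
  unfold cG. nf. foc 2 2. rewrite ich by tyeq. rewrite Nr, Nr'. rewrite <- ich by tyeq. nfq.
  rw 1 2 N. rw 0 2 Ns. reflexivity.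
Qed.

Lemma cG_assoc m1 m2 m3 m4 V psi V' psi' V'' psi'' :
  is_monad m1 -> is_monad m2 -> is_monad m3 -> is_monad m4 ->
  is_EMw1 m1 m2 V psi -> is_EMw1 m2 m3 V' psi' -> is_EMw1 m3 m4 V'' psi'' ->
  vcomp (cG m1 m3 m4 V'' psi'' (comp1 V' V) (comp1w_psi V' psi' V psi))
    (hcomp (id2 (G1 m3 m4 V'' psi'')) (cG m1 m2 m3 V' psi' V psi)) =
  vcomp (cG m1 m2 m4 (comp1 V'' V') (comp1w_psi V'' psi'' V' psi') V psi)
    (hcomp (cG m2 m3 m4 V'' psi'' V' psi') (id2 (G1 m1 m2 V psi))).
Proof.
  intros Hm1 Hm2 Hm3 Hm4 HV HV' HV''.
  pose proof (EMw1_comp m1 m2 m3 V psi V' psi' Hm1 Hm2 Hm3 HV HV') as HVV.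
  pose proof (EMw1_comp m2 m3 m4 V' psi' V'' psi'' Hm2 Hm3 Hm4 HV' HV'') as HV2.
  pose proof (EMw1_comp m1 m3 m4 _ _ V'' psi'' Hm1 Hm3 Hm4 HVV HV'') as HA.
  pose proof (EMw1_comp m1 m2 m4 V psi _ _ Hm1 Hm2 Hm4 HV HV2) as HB.
  pose proof (proj1 HV) as Hp. pose proof (proj1 HV') as Hp'. pose proof (proj1 HV'') as Hp''.
  destruct (HS _ _ _ _ Hm1 Hm2 HV) as (S1 & S2 & _ & _).
  destruct (HS _ _ _ _ Hm2 Hm3 HV') as (S1' & S2' & _ & _).
  destruct (HS _ _ _ _ Hm3 Hm4 HV'') as (S1'' & S2'' & _ & _).
  destruct (HS _ _ _ _ Hm1 Hm3 HVV) as (SVV1 & SVV2 & _ & EVV).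
  destruct (HS _ _ _ _ Hm2 Hm4 HV2) as (SV21 & SV22 & _ & EV2).
  destruct (HS _ _ _ _ Hm1 Hm4 HA) as (SA1 & SA2 & _ & _).
  pose proof HPF as (_ & _ & _ & _ & HC & _ & HAs & _).
  pose proof (proj1 (HC _ _ _ _ _ _ _ Hm1 Hm2 Hm3 HV HV')) as C1.
  pose proof (proj1 (HC _ _ _ _ _ _ _ Hm2 Hm3 Hm4 HV' HV'')) as C2.
  pose proof (proj1 (HC _ _ _ _ _ _ _ Hm1 Hm3 Hm4 HVV HV'')) as CA.
  pose proof (proj1 (HC _ _ _ _ _ _ _ Hm1 Hm2 Hm4 HV HV2)) as CB.
  pose proof (HAs _ _ _ _ _ _ _ _ _ _ Hm1 Hm2 Hm3 Hm4 HV HV' HV'') as AS.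
  rewrite <- (@c1A _ _ _ _ _ _ V'' V' V), (psiA_eq m1 m2 m3 m4 V psi V' psi' V'' psi'' Hp Hp' Hp'') in CB.
  unfold cG.
  rewrite <- (@c1A _ _ _ _ _ _ V'' V' V), (psiA_eq m1 m2 m3 m4 V psi V' psi' V'' psi'' Hp Hp' Hp'').
  rewrite (@hc_split1 _ _ _ _ _ (S m3 m4 V'' psi'') (S m1 m3 (comp1 V' V) (comp1w_psi V' psi' V psi))).
  rewrite (@hc_split1 _ _ _ _ _ (S m2 m3 V' psi') (S m1 m2 V psi)).
  rewrite (@hc_split2 _ _ _ _ _ (S m2 m4 (comp1 V'' V') (comp1w_psi V'' psi'' V' psi')) (S m1 m2 V psi)).
  rewrite (@hc_split1 _ _ _ _ _ (S m3 m4 V'' psi'') (S m2 m3 V' psi')).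
  nf. wL (G1 m3 m4 V'' psi'') in EVV. rw 3 2 EVV. swo 2. swo 3. swo 4.
  symmetry. wR (G1 m1 m2 V psi) in EV2. rw 3 2 EV2. swi 2. swo 4. swi 3.
  nfh AS. rw 1 2 (eq_sym AS). reflexivity.
Qed.

Lemma cG_unit1 m m' V psi : is_monad m -> is_monad m' -> is_EMw1 m m' V psi ->
  vcomp (cG m m m' V psi (id1 (mk m)) (id1w_psi m))
    (hcomp (id2 (G1 m m' V psi)) (uG m)) = id2 (G1 m m' V psi).
Proof.
  intros Hm Hm' HV. pose proof (EMw1_id m Hm) as H0. pose proof (proj1 HV) as Hp.
  destruct (HS _ _ _ _ Hm Hm' HV) as (S1 & S2 & SiS & _).
  destruct (HS _ _ _ _ Hm Hm H0) as (S01 & S02 & _ & E0).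
  pose proof HPF as (_ & _ & _ & HU & HC & _ & _ & HUC).
  pose proof (proj1 (HU m Hm)) as U0.
  pose proof (proj1 (HC _ _ _ _ _ _ _ Hm Hm Hm' H0 HV)) as C1.
  pose proof (proj1 (HUC _ _ _ _ Hm Hm' HV)) as UC.
  rewrite (@c1r _ _ _ _ V), (psiU1 m m' V psi Hp) in C1.
  unfold cG, uG. rewrite (@c1r _ _ _ _ V), (psiU1 m m' V psi Hp).
  rewrite (@hc_split1 _ _ _ _ _ (S m m' V psi) (S m m (id1 (mk m)) (id1w_psi m))).
  nf. wL (G1 m m' V psi) in E0. rw 3 2 E0. swo 2. nfh UC. rw 1 2 UC. rw 0 2 SiS. reflexivity.
Qed.

Lemma cG_unit2 m m' V psi : is_monad m -> is_monad m' -> is_EMw1 m m' V psi ->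
  vcomp (cG m m' m' (id1 (mk m')) (id1w_psi m') V psi)
    (hcomp (uG m') (id2 (G1 m m' V psi))) = id2 (G1 m m' V psi).
Proof.
  intros Hm Hm' HV. pose proof (EMw1_id m' Hm') as H0. pose proof (proj1 HV) as Hp.
  destruct (HS _ _ _ _ Hm Hm' HV) as (S1 & S2 & SiS & _).
  destruct (HS _ _ _ _ Hm' Hm' H0) as (S01 & S02 & _ & E0).
  pose proof HPF as (_ & _ & _ & HU & HC & _ & _ & HUC).
  pose proof (proj1 (HU m' Hm')) as U0.
  pose proof (proj1 (HC _ _ _ _ _ _ _ Hm Hm' Hm' HV H0)) as C1.
  pose proof (proj2 (HUC _ _ _ _ Hm Hm' HV)) as UC.
  rewrite (@c1l _ _ _ _ V), (psiU2 m m' V psi Hp) in C1.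
  unfold cG, uG. rewrite (@c1l _ _ _ _ V), (psiU2 m m' V psi Hp).
  rewrite (@hc_split2 _ _ _ _ _ (S m' m' (id1 (mk m')) (id1w_psi m')) (S m m' V psi)).
  nf. wR (G1 m m' V psi) in E0. rw 3 2 E0. swi 2. nfh UC. rw 1 2 UC. rw 0 2 SiS. reflexivity.
Qed.

Lemma transport :
  (forall (m m' : monad K) (W : hom (mk m) (mk m')) (phi : cell (mk m) (mk m')),
      is_monad m -> is_monad m' -> is_EMw1 m m' W phi ->
      G2 m m' W phi W phi (id2w m' W phi) = id2 (G1 m m' W phi)) ->
  (forall (m m' : monad K) (V W U : hom (mk m) (mk m'))
          (psi phi chi rho tau : cell (mk m) (mk m')),
      is_monad m -> is_monad m' ->
      is_EMw1 m m' V psi -> is_EMw1 m m' W phi -> is_EMw1 m m' U chi ->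
      is_EMw2 m m' V psi W phi rho -> is_EMw2 m m' W phi U chi tau ->
      G2 m m' V psi U chi (vcomp2w m U tau rho) =
        vcomp (G2 m m' W phi U chi tau) (G2 m m' V psi W phi rho)) ->
  is_pseudofunctor EMc G1 G2 uG cG /\
  is_psnat_iso EMc F1 F2 uF cF G1 G2 uG cG (fun m => id1 (JO EMc m)) S.
Proof.
  intros HG2 HG3. split.
  - split; [exact HG1|]. split; [exact HG2|]. split; [exact HG3|].
    split; [exact uG_iso|]. split; [exact cG_iso|]. split; [intros; apply cG_nat; auto|].
    split; [exact cG_assoc|]. intros; split; [apply cG_unit1|apply cG_unit2]; auto.
  - split; [|split; [|split; [|split]]].
    + intros m _. exists (id1 (JO EMc m)). split; apply c1l.
    + intros m m' V psi Hm Hm' HV. rewrite c1r, c1l. apply S_iso; auto.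
    + intros. rewrite hid_r, hid_l. apply HSn; auto.
    + intros m Hm. pose proof (EMw1_id m Hm) as H0.
      destruct (HS _ _ _ _ Hm Hm H0) as (S1 & S2 & _ & E).
      pose proof HPF as (_ & _ & _ & HU & _).
      pose proof (proj1 (HU m Hm)) as U0.
      rewrite hid_r, hid_l. unfold uG. nf. rw 0 2 E. reflexivity.
    + intros m1 m2 m3 V psi V' psi' Hm1 Hm2 Hm3 HV HV'.
      pose proof (EMw1_comp m1 m2 m3 V psi V' psi' Hm1 Hm2 Hm3 HV HV') as HVV.
      destruct (HS _ _ _ _ Hm1 Hm2 HV) as (S1 & S2 & _ & _).
      destruct (HS _ _ _ _ Hm2 Hm3 HV') as (S1' & S2' & _ & _).
      destruct (HS _ _ _ _ Hm1 Hm3 HVV) as (SVV1 & SVV2 & _ & E).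
      pose proof HPF as (_ & _ & _ & _ & HC & _).
      pose proof (proj1 (HC _ _ _ _ _ _ _ Hm1 Hm2 Hm3 HV HV')) as C1.
      rewrite hid_r, hid_l. unfold cG.
      rewrite (@hc_split1 _ _ _ _ _ (S m2 m3 V' psi') (S m1 m2 V psi)).
      nf. rw 0 2 E. reflexivity.
Qed.

End TR.

Section P2c.
Context {K : TwoCat} {HK : strict_2cat K}.
Variable EMc : EMchoice K.
Hypothesis HEM : EMchoice_ok EMc.
Variables spl spl' : split_choice EMc.
Hypothesis Hspl : split_choice_ok EMc spl.
Hypothesis Hspl' : split_choice_ok EMc spl'.
Variables (F1 : J1type EMc) (F2 : J2type EMc) (G1 : J1type EMc) (G2 : J2type EMc).
Hypothesis HJ : is_Jw EMc spl F1 F2.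
Hypothesis HJG : is_Jw EMc spl' G1 G2.

Ltac mon m Hm :=
  let H := fresh in pose proof (EMf EMc HEM m Hm) as H;
  let Et := fresh "Et" in let He := fresh "He" in let Emu := fresh "Emu" in
  let T1 := fresh "T1" in let T2 := fresh "T2" in
  destruct H as (Et & He & Emu & T1 & T2); apply toHE in Et; apply toHE in Emu;
  let H' := fresh in pose proof Hm as H';
  let Hmu := fresh "Hmu" in let Heta := fresh "Heta" in let Hass := fresh "Hass" in
  let Hu1 := fresh "Hu" in let Hu2 := fresh "Hu" in
  destruct H' as (Hmu & Heta & Hass & Hu1 & Hu2).


Tactic Notation "oneS" constr(sp) constr(Hsp) constr(HJx) constr(m) constr(m') constr(V) constr(psi)
   constr(Hm) constr(Hm') constr(HV) "as" ident(W) ident(Ev) ident(Ea) :=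
  pose proof (J_WAS EMc HEM sp Hsp m m' V psi Hm Hm' HV) as W;
  pose proof (proj1 HJx m m' V psi Hm Hm' HV) as Ev; destruct Ev as [Ev Ea];
  apply eq_sym in Ev; apply toHE in Ev;
  let W' := fresh in pose proof W as W';
  let Hpi := fresh "Hpi" in let Hio := fresh "Hio" in
  destruct W' as (_ & _ & Hpi & Hio & _ & _);
  let Hps := fresh "Hps" in pose proof (proj1 HV) as Hps.


Lemma s1_inv m m' V psi : is_monad m -> is_monad m' -> is_EMw1 m m' V psi ->
  vcomp (s1 EMc spl' spl G1 F1 m m' V psi) (s1 EMc spl spl' F1 G1 m m' V psi) = id2 (G1 m m' V psi).
Proof.
  intros Hm Hm' HV.
  destruct (s1_spec EMc HEM spl spl' Hspl Hspl' F1 F2 G1 G2 HJ HJG m m' V psi Hm Hm' HV) as [H1 E1].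
  destruct (s1_spec EMc HEM spl' spl Hspl' Hspl G1 G2 F1 F2 HJG HJ m m' V psi Hm Hm' HV) as [H2 E2].
  oneS spl Hspl HJ m m' V psi Hm Hm' HV as WF EvF EaF.
  oneS spl' Hspl' HJG m m' V psi Hm Hm' HV as WG EvG EaG.
  destruct WF as (_ & _ & _ & _ & HipF & _).
  destruct WG as (_ & _ & _ & _ & HipG & HpiioG).
  mon m Hm. mon m' Hm'. tnorm. unfold hatc in *. nfh HipF. nfh HipG. nfh HpiioG.
  apply (faith EMc HEM m' Hm' _ (G1 m m' V psi) (G1 m m' V psi)); [ty|ty|].
  nf. rewrite E2, E1. nf. rw 1 2 HipF. rw 1 3 (eq_sym HipG). rw 0 2 HpiioG. reflexivity.
Qed.

End P2c.

Theorem theorem3p5 :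
  forall (K : TwoCat) (EMc : EMchoice K),
    strict_2cat K ->
    EMchoice_ok EMc ->
    idempotents_split K ->
    (forall (spl : split_choice EMc) (F1 : J1type EMc) (F2 : J2type EMc),
        split_choice_ok EMc spl -> is_Jw EMc spl F1 F2 ->
        exists (u : Utype EMc) (c : Ctype EMc), is_pseudofunctor EMc F1 F2 u c) /\
    (forall (spl spl' : split_choice EMc)
            (F1 : J1type EMc) (F2 : J2type EMc) (G1 : J1type EMc) (G2 : J2type EMc)
            (uF : Utype EMc) (cF : Ctype EMc),
        split_choice_ok EMc spl -> split_choice_ok EMc spl' ->
        is_Jw EMc spl F1 F2 -> is_Jw EMc spl' G1 G2 ->
        is_pseudofunctor EMc F1 F2 uF cF ->
        exists (uG : Utype EMc) (cG : Ctype EMc)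
               (s0 : forall m : monad K, hom (JO EMc m) (JO EMc m))
               (s1 : forall m m' : monad K, hom (mk m) (mk m') -> cell (mk m) (mk m') ->
                       cell (JO EMc m) (JO EMc m')),
          is_pseudofunctor EMc G1 G2 uG cG /\
          is_psnat_iso EMc F1 F2 uF cF G1 G2 uG cG s0 s1).
Proof.
  intros K EMc HK HEM _. split.
  - intros spl F1 F2 Hspl HJ. exists (uu EMc spl F1), (cc EMc spl F1).
    split; [intros; apply (proj2 HJ); auto|].
    split; [intros; apply (F2_id EMc HEM spl Hspl F1 F2 HJ); auto|].
    split; [intros; eapply (F2_vcomp EMc HEM spl Hspl F1 F2 HJ); eauto|].
    split; [intros; apply (uu_iso EMc HEM spl Hspl F1 F2 HJ); auto|].
    split; [intros; apply (cc_iso EMc HEM spl Hspl F1 F2 HJ); auto|].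
    split; [intros; apply (cc_nat EMc HEM spl Hspl F1 F2 HJ); auto|].
    split; [intros; apply (cc_assoc EMc HEM spl Hspl F1 F2 HJ); auto|].
    intros; split; [apply (cc_unit1 EMc HEM spl Hspl F1 F2 HJ)|apply (cc_unit2 EMc HEM spl Hspl F1 F2 HJ)]; auto.
  - intros spl spl' F1 F2 G1 G2 uF cF Hspl Hspl' HJF HJG HPF.
    exists (uG EMc uF (s1 EMc spl' spl G1 F1)).
    exists (cG EMc cF (s1 EMc spl spl' F1 G1) (s1 EMc spl' spl G1 F1)).
    exists (fun m => id1 (JO EMc m)), (s1 EMc spl spl' F1 G1).
    apply (transport EMc F1 F2 uF cF G1 G2 _ _ HPF).
    + intros; apply (proj2 HJG); auto.
    + intros m m' V psi Hm Hm' HV.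
      destruct (s1_spec EMc HEM spl spl' Hspl Hspl' F1 F2 G1 G2 HJF HJG m m' V psi Hm Hm' HV) as [H1 _].
      destruct (s1_spec EMc HEM spl' spl Hspl' Hspl G1 G2 F1 F2 HJG HJF m m' V psi Hm Hm' HV) as [H2 _].
      split; [exact H1|]. split; [exact H2|]. split.
      * apply (s1_inv EMc HEM spl spl' Hspl Hspl' F1 F2 G1 G2 HJF HJG); auto.
      * apply (s1_inv EMc HEM spl' spl Hspl' Hspl G1 G2 F1 F2 HJG HJF); auto.
    + intros; apply (s1_nat EMc HEM spl spl' Hspl Hspl' F1 F2 G1 G2 HJF HJG); auto.
    + intros; apply (F2_id EMc HEM spl' Hspl' G1 G2 HJG); auto.
    + intros; eapply (F2_vcomp EMc HEM spl' Hspl' G1 G2 HJG); eauto.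
Qed.
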